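(* Let $\mathcal{H}\subset X$ be either a horoball or a $k$-horoball for some integer $k\ge1$, and let $\tau_1,\tau_2$ be regular geodesic segments in $X$ whose endpoints $a_1,b_1$ and $a_2,b_2$ satisfy $d_X(a_1,a_2)\le L$ and $d_X(b_1,b_2)\le L$. If $\tau_1\cap\mathcal{H}$ contains a segment of length at least $T\ge4L+8\delta+3$, then $\tau_2\cap\mathcal{H}$ contains a segment of length at least $T-(4L+8\delta)$.
   Context: $\Gamma$ is a finitely generated group hyperbolic relative to a finite collection $\mathcal{P}$ of infinite subgroups, with finite symmetric generating set $\mathcal{S}$ such that $P\cap\mathcal{S}$ generates $P$ for each $P\in\mathcal{P}$. $X$ is the Groves–Manning cusped space: $\mathrm{Cay}(\Gamma,\mathcal{S})$ with a combinatorial horoball glued along each left coset $gP$; it is a locally finite graph with unit-length edges and metric $d_X$, and $\delta\ge1$ is an integer such that $X$ is $\delta$-hyperbolic. Depth $D_X$ of a vertex is its distance to the Cayley graph, extended linearly over edges. A horoball is the smallest full subgraph containing the closure of a component of $D_X^{-1}(0,\infty)$; for an integer $k>0$ a $k$-horoball is a component of $D_X^{-1}[k,\infty)$. A geodesic $\gamma:[a,b]\to\mathcal{H}$ in a horoball is regular if there are $a\le A\le B\le b$ with $B-A\le3$ such that $\frac{d}{dt}D_X(\gamma(t))$ is $1$ for $t<A$, $0$ for $A<t<B$, $-1$ for $t>B$; a geodesic in $X$ is regular if every intersection with a horoball is regular. *)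

(* Defs.v *)
From Stdlib Require Import Reals List Lra.
From Coquelicot Require Import Coquelicot.
Open Scope R_scope.

Record CuspData := {
  cG : Type;
  cmul : cG -> cG -> cG;
  cinv : cG -> cG;
  ce : cG;
  cI : Type;
  cP : cI -> cG -> Prop;
  cS : list cG
}.

Section Cusped.
Variable cd : CuspData.
Local Notation G := (cG cd).
Local Notation mul := (cmul cd).
Local Notation inv := (cinv cd).
Local Notation e := (ce cd).
Local Notation I := (cI cd).
Local Notation P := (cP cd).
Local Notation Sg := (cS cd).

Definition gprod (w : list G) : G := fold_right mul e w.

Definition StandingAssumptions : Prop :=
  (forall x y z, mul x (mul y z) = mul (mul x y) z) /\
  (forall x, mul e x = x) /\ (forall x, mul x e = x) /\
  (forall x, mul (inv x) x = e) /\ (forall x, mul x (inv x) = e) /\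
  (* the collection P is finite and is a set (no repetitions) *)
  (exists l : list I, forall i, In i l) /\
  (forall i j, (forall x, P i x <-> P j x) -> i = j) /\
  (forall i, P i e /\ (forall x y, P i x -> P i y -> P i (mul x y))
             /\ (forall x, P i x -> P i (inv x))) /\
  (forall i, ~ exists l : list G, forall x, P i x -> In x l) /\
  (forall s, In s Sg -> In (inv s) Sg) /\
  (forall g, exists w, (forall s, In s w -> In s Sg) /\ gprod w = g) /\
  (forall i x, P i x ->
     exists w, (forall s, In s w -> In s Sg /\ P i s) /\ gprod w = x).

(** * The Groves–Manning cusped space as a graph *)
(** Vertices: Cayley vertices, and horoball vertices [Hor i h n] standing for the
    vertex (h, n+1) of the combinatorial horoball over the coset h P_i. *)
Inductive Vtx : Type :=
| Cay : G -> Vtx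
| Hor : I -> G -> nat -> Vtx.

Definition wl_le (i : I) (x : G) (n : nat) : Prop :=
  exists w, (length w <= n)%nat /\ (forall s, In s w -> In s Sg /\ P i s) /\ gprod w = x.

Definition adj0 (u v : Vtx) : Prop :=
  match u, v with
  | Cay g, Cay g' => exists s, In s Sg /\ g' = mul g s /\ g <> g'
  | Cay g, Hor _ h n => h = g /\ n = 0%nat
  | Hor i h n, Hor j h' m =>
      (i = j /\ h = h' /\ m = S n) \/
      (i = j /\ n = m /\ h <> h' /\ wl_le i (mul (inv h) h') (2 ^ (S n)))
  | _, _ => False
  end.

Definition adj (u v : Vtx) : Prop := adj0 u v \/ adj0 v u.

Fixpoint walk (n : nat) (u v : Vtx) : Prop :=
  match n with
  | O => u = v
  | S n => exists w, adj u w /\ walk n w v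
  end.

Definition dV (u v : Vtx) : R :=
  real (Glb_Rbar (fun r => exists n, r = INR n /\ walk n u v)).

(** A point is a vertex [u] (represented as [u,u,0]) or a point at parameter
    [t] on an edge [u -- v].  Different representatives of the same geometric
    point are at distance 0 for [dX]. *)
Record Pt : Type := mkPt {
  pu : Vtx; pv : Vtx; pt : R;
  pvalid : (adj pu pv /\ 0 <= pt <= 1) \/ (pu = pv /\ pt = 0) }.

Definition dcand (p q : Pt) (r : R) : Prop :=
  (pu p = pu q /\ pv p = pv q /\ r = Rabs (pt p - pt q)) \/
  (pu p = pv q /\ pv p = pu q /\ r = Rabs (pt p - (1 - pt q))) \/
  (exists x y ex ey,
      ((x = pu p /\ ex = pt p) \/ (x = pv p /\ ex = 1 - pt p)) /\
      ((y = pu q /\ ey = pt q) \/ (y = pv q /\ ey = 1 - pt q)) /\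
      r = ex + dV x y + ey).

Definition dX (p q : Pt) : R := real (Glb_Rbar (dcand p q)).

Definition depthV (v : Vtx) : R :=
  real (Glb_Rbar (fun r => exists g, r = dV v (Cay g))).

Definition depth (p : Pt) : R := (1 - pt p) * depthV (pu p) + pt p * depthV (pv p).

Definition Xopen (U : Pt -> Prop) : Prop :=
  forall p, U p -> exists eps, 0 < eps /\ forall q, dX p q < eps -> U q.

Definition Xconnected (C : Pt -> Prop) : Prop :=
  ~ exists U V, Xopen U /\ Xopen V /\
      (forall p, C p -> U p \/ V p) /\
      (exists p, C p /\ U p) /\ (exists p, C p /\ V p) /\
      (forall p, C p -> U p -> V p -> False).

Definition component (A C : Pt -> Prop) : Prop :=
  (forall p, C p -> A p) /\ (exists p, C p) /\ Xconnected C /\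
  (forall C', (forall p, C p -> C' p) -> (forall p, C' p -> A p) ->
              Xconnected C' -> forall p, C' p -> C p).

Definition closure (C : Pt -> Prop) (q : Pt) : Prop :=
  forall eps, 0 < eps -> exists p, C p /\ dX p q < eps.

(** points of the full subgraph spanned by the vertex set [W] *)
Definition fullsub (W : Vtx -> Prop) (p : Pt) : Prop :=
  (pt p = 0 /\ W (pu p)) \/ (pt p = 1 /\ W (pv p)) \/ (W (pu p) /\ W (pv p)).

(** A horoball: the smallest full subgraph containing the closure of a
    component of D_X^{-1}(0, oo). *)
Definition is_horoball (H : Pt -> Prop) : Prop :=
  exists C, component (fun p => 0 < depth p) C /\
  exists W : Vtx -> Prop,
    (forall q, closure C q -> fullsub W q) /\
    (forall W', (forall q, closure C q -> fullsub W' q) -> forall v, W v -> W' v) /\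
    (forall p, H p <-> fullsub W p).

Definition is_khoroball (k : nat) (H : Pt -> Prop) : Prop :=
  component (fun p => INR k <= depth p) H.

Definition geodesic (g : R -> Pt) (a b : R) : Prop :=
  a <= b /\ forall s t, a <= s <= b -> a <= t <= b -> dX (g s) (g t) = Rabs (s - t).

Definition hyperbolic (delta : R) : Prop :=
  forall (g1 g2 g3 : R -> Pt) (a1 b1 a2 b2 a3 b3 : R),
    geodesic g1 a1 b1 -> geodesic g2 a2 b2 -> geodesic g3 a3 b3 ->
    dX (g1 b1) (g2 a2) = 0 -> dX (g2 b2) (g3 a3) = 0 -> dX (g3 b3) (g1 a1) = 0 ->
    forall s, a1 <= s <= b1 ->
      exists t, (a2 <= t <= b2 /\ dX (g1 s) (g2 t) <= delta) \/
                (a3 <= t <= b3 /\ dX (g1 s) (g3 t) <= delta).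

Definition regular_piece (g : R -> Pt) (c d : R) : Prop :=
  exists A B, c <= A <= B /\ B <= d /\ B - A <= 3 /\
    (forall t, c < t < A -> is_derive (fun s => depth (g s)) t 1) /\
    (forall t, A < t < B -> is_derive (fun s => depth (g s)) t 0) /\
    (forall t, B < t < d -> is_derive (fun s => depth (g s)) t (-1)).

(** a geodesic is regular if every intersection with a horoball (i.e. every
    maximal subinterval mapped into a horoball) is regular *)
Definition regular_geodesic (g : R -> Pt) (a b : R) : Prop :=
  geodesic g a b /\
  forall H, is_horoball H ->
    forall c d, a <= c <= d -> d <= b ->
      (forall t, c <= t <= d -> H (g t)) ->
      (forall c' d', a <= c' <= c -> d <= d' <= b ->
          (forall t, c' <= t <= d' -> H (g t)) -> c' = c /\ d' = d) ->
      regular_piece g c d.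

Definition contains_segment (g : R -> Pt) (a b : R) (H : Pt -> Prop) (T : R) : Prop :=
  exists c d, a <= c <= d /\ d <= b /\ T <= d - c /\ forall t, c <= t <= d -> H (g t).

End Cusped.

(* Main.v *)
Require Import Defs.
From Stdlib Require Import Reals List Lra Lia Classical.
From Coquelicot Require Import Coquelicot.
Import ListNotations.
Open Scope R_scope.


Lemma glb_min (E : R -> Prop) (m : R) :
  E m -> (forall r, E r -> m <= r) -> real (Glb_Rbar E) = m.
Proof.
  intros Hm Hl.
  rewrite (is_glb_Rbar_unique E (Finite m)); [reflexivity|].
  split.
  - intros x Hx; simpl; apply Hl; auto.
  - intros b Hb. specialize (Hb m Hm). exact Hb.
Qed.

Lemma nat_min (P : nat -> Prop) : (exists n, P n) -> exists m, P m /\ forall k, P k -> (m <= k)%nat.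
Proof.
  intros [n Hn]. revert Hn. induction n as [n IH] using (well_founded_induction Wf_nat.lt_wf).
  intros Hn. destruct (classic (exists k, P k /\ (k < n)%nat)) as [[k [Hk Hkn]]|Hno].
  - exact (IH k Hkn Hk).
  - exists n; split; auto. intros k Hk. destruct (Nat.lt_ge_cases k n); auto.
    exfalso; apply Hno; eauto.
Qed.

Lemma list_min (E : R -> Prop) (l : list R) :
  (forall r, E r -> In r l) -> (exists r, E r) -> exists m, E m /\ forall r, E r -> m <= r.
Proof.
  revert E; induction l as [|a l IH]; intros E HE [r Hr].
  - destruct (HE r Hr).
  - destruct (classic (exists r, E r /\ r <> a)) as [Hex|Hno].
    + destruct (IH (fun r => E r /\ r <> a)) as [m [[Hm1 Hm2] Hm3]].
      { intros x [Hx1 Hx2]. destruct (HE x Hx1); [congruence|auto]. }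
      { exact Hex. }
      destruct (classic (E a)) as [Ha|Ha].
      * destruct (Rle_dec a m).
        -- exists a; split; auto. intros x Hx. destruct (classic (x = a)) as [->|Hxa]; [lra|].
           specialize (Hm3 x (conj Hx Hxa)); lra.
        -- exists m; split; auto. intros x Hx. destruct (classic (x = a)) as [->|Hxa]; [lra|].
           apply Hm3; auto.
      * exists m; split; auto. intros x Hx. apply Hm3; split; auto. congruence.
    + exists r; split; auto. intros x Hx.
      assert (x = a) by (apply NNPP; intro; apply Hno; eauto).
      assert (r = a) by (apply NNPP; intro; apply Hno; eauto). subst; lra.
Qed.

Section Graph.
Variable cd : CuspData.
Variable hSA : StandingAssumptions cd.
Notation G := (cG cd).
Notation mul := (cmul cd).
Notation e := (ce cd).
Notation Vtx := (Vtx cd).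

Lemma adj_sym u v : adj cd u v -> adj cd v u.
Proof. unfold adj; tauto. Qed.

Lemma walk_app n m u v w : walk cd n u v -> walk cd m v w -> walk cd (n + m) u w.
Proof.
  revert u; induction n; intros u H1 H2; simpl in *.
  - subst; auto.
  - destruct H1 as [x [Hx Hw]]. exists x; split; [exact Hx|]. eapply IHn; eauto.
Qed.

Lemma walk_rev n u v : walk cd n u v -> walk cd n v u.
Proof.
  revert u v; induction n; intros u v H.
  - simpl in *; auto.
  - simpl in H. destruct H as [x [Hx Hw]]. specialize (IHn _ _ Hw).
    replace (S n) with (n + 1)%nat by lia. eapply walk_app; eauto.
    simpl. exists u; split; auto. apply adj_sym; auto.
Qed.

Lemma walk_word (w : list G) (x : G) :
  (forall s, In s w -> In s (cS cd)) -> exists n, walk cd n (Cay cd x) (Cay cd (mul x (gprod cd w))).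
Proof.
  destruct hSA as [Hass [Hl [Hr _]]].
  revert x; induction w as [|s w IH]; intros x Hw; simpl.
  - exists 0%nat. simpl. rewrite Hr. reflexivity.
  - destruct (IH (mul x s)) as [n Hn]; [intros; apply Hw; simpl; auto|].
    rewrite Hass.
    destruct (classic (x = mul x s)) as [Heq|Hne].
    + exists n. rewrite <- Heq in Hn. rewrite <- Heq. exact Hn.
    + exists (S n). simpl. exists (Cay cd (mul x s)). split; auto.
      left. simpl. exists s. split; [apply Hw; simpl; auto|]. split; auto.
Qed.

Lemma walk_hor i h n : exists m, walk cd m (Cay cd h) (Hor cd i h n).
Proof.
  induction n.
  - exists 1%nat. simpl. exists (Hor cd i h 0). split; auto. left; simpl; auto.
  - destruct IHn as [m Hm]. exists (m + 1)%nat. eapply walk_app; eauto.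
    simpl. exists (Hor cd i h (S n)). split; auto. left; simpl. left; auto.
Qed.

Lemma walk_from_e v : exists n, walk cd n (Cay cd e) v.
Proof.
  destruct hSA as [Hass [Hl [Hr [_ [_ [_ [_ [_ [_ [_ [Hgen _]]]]]]]]]]].
  destruct v as [g|i h k].
  - destruct (Hgen g) as [w [Hw1 Hw2]]. destruct (walk_word w e Hw1) as [n Hn].
    rewrite Hl, Hw2 in Hn. eauto.
  - destruct (Hgen h) as [w [Hw1 Hw2]]. destruct (walk_word w e Hw1) as [n Hn].
    rewrite Hl, Hw2 in Hn. destruct (walk_hor i h k) as [m Hm].
    exists (n + m)%nat. eapply walk_app; eauto.
Qed.

Lemma conn u v : exists n, walk cd n u v.
Proof.
  destruct (walk_from_e u) as [n Hn]. destruct (walk_from_e v) as [m Hm].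
  exists (n + m)%nat. eapply walk_app; [apply walk_rev|]; eauto.
Qed.

Lemma dV_spec u v : exists n, walk cd n u v /\ dV cd u v = INR n /\ forall m, walk cd m u v -> (n <= m)%nat.
Proof.
  destruct (nat_min (fun n => walk cd n u v) (conn u v)) as [n [Hn Hm]].
  exists n; split; auto; split; auto.
  unfold dV. apply glb_min; eauto.
  intros r [k [-> Hk]]. apply le_INR; auto.
Qed.

Lemma dV_le_walk u v n : walk cd n u v -> dV cd u v <= INR n.
Proof. intros H. destruct (dV_spec u v) as [k [_ [-> Hk]]]. apply le_INR; auto. Qed.

Lemma dV_ge0 u v : 0 <= dV cd u v.
Proof. destruct (dV_spec u v) as [k [_ [-> _]]]. apply pos_INR. Qed.

Lemma dV_refl u : dV cd u u = 0.
Proof. pose proof (dV_le_walk u u 0 eq_refl). pose proof (dV_ge0 u u). simpl in *; lra. Qed.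

Lemma dV_sym u v : dV cd u v = dV cd v u.
Proof.
  destruct (dV_spec u v) as [k [Hk [Hd _]]]. destruct (dV_spec v u) as [k' [Hk' [Hd' _]]].
  pose proof (dV_le_walk _ _ _ (walk_rev _ _ _ Hk)). pose proof (dV_le_walk _ _ _ (walk_rev _ _ _ Hk')).
  lra.
Qed.

Lemma dV_tri u v w : dV cd u w <= dV cd u v + dV cd v w.
Proof.
  destruct (dV_spec u v) as [k [Hk [Hd _]]]. destruct (dV_spec v w) as [k' [Hk' [Hd' _]]].
  pose proof (dV_le_walk _ _ _ (walk_app _ _ _ _ _ Hk Hk')). rewrite plus_INR in H. lra.
Qed.

Lemma dV_adj u v : adj cd u v -> dV cd u v <= 1.
Proof. intros H. apply (dV_le_walk u v 1). simpl. exists v; auto. Qed.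

Lemma dV_lt1 u v : dV cd u v < 1 -> u = v.
Proof.
  intros H. destruct (dV_spec u v) as [k [Hk [Hd _]]]. destruct k; [exact Hk|].
  rewrite Hd in H. rewrite S_INR in H. pose proof (pos_INR k). lra.
Qed.

Lemma depthV_spec v : exists g, depthV cd v = dV cd v (Cay cd g) /\ forall g', depthV cd v <= dV cd v (Cay cd g').
Proof.
  destruct (nat_min (fun n => exists g, dV cd v (Cay cd g) = INR n)) as [n [[g Hg] Hm]].
  { destruct (dV_spec v (Cay cd e)) as [k [_ [Hk _]]]. eauto. }
  assert (Hd : depthV cd v = INR n).
  { unfold depthV. apply glb_min. { exists g; auto. }
    intros r [g' ->]. destruct (dV_spec v (Cay cd g')) as [k [_ [Hk _]]]. rewrite Hk.
    apply le_INR. apply Hm. eauto. }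
  exists g. split; [congruence|]. intros g'.
  destruct (dV_spec v (Cay cd g')) as [k [_ [Hk _]]]. rewrite Hd, Hk. apply le_INR, Hm. eauto.
Qed.

Lemma depthV_ge0 v : 0 <= depthV cd v.
Proof. destruct (depthV_spec v) as [g [-> _]]. apply dV_ge0. Qed.

Lemma depthV_lip u v : depthV cd u <= depthV cd v + dV cd u v.
Proof.
  destruct (depthV_spec v) as [g [Hg _]]. destruct (depthV_spec u) as [_ [_ Hu]].
  specialize (Hu g). pose proof (dV_tri u v (Cay cd g)). lra.
Qed.

Lemma depthV_adj u v : adj cd u v -> Rabs (depthV cd u - depthV cd v) <= 1.
Proof.
  intros H. pose proof (dV_adj _ _ H). pose proof (depthV_lip u v). pose proof (depthV_lip v u).
  rewrite (dV_sym v u) in H2. apply Rabs_le; lra.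
Qed.

End Graph.

Section Metric.
Variable cd : CuspData.
Variable hSA : StandingAssumptions cd.
Notation Vtx := (Vtx cd).
Notation Pt := (Pt cd).
Notation pu := (pu cd). Notation pv := (pv cd). Notation pt := (pt cd).
Notation dV := (dV cd). Notation dX := (dX cd).

Definition endpt (p : Pt) (x : Vtx) (ex : R) : Prop :=
  (x = pu p /\ ex = pt p) \/ (x = pv p /\ ex = 1 - pt p).

Lemma pt_range p : 0 <= pt p <= 1.
Proof. destruct (pvalid cd p) as [[_ H]|[_ H]]; lra. Qed.

Lemma endpt_range p x ex : endpt p x ex -> 0 <= ex <= 1.
Proof. pose proof (pt_range p). unfold endpt; intros [[_ ->]|[_ ->]]; lra. Qed.

Definition C12 (p q : Pt) (r : R) : Prop :=
  (pu p = pu q /\ pv p = pv q /\ r = Rabs (pt p - pt q)) \/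
  (pu p = pv q /\ pv p = pu q /\ r = Rabs (pt p - (1 - pt q))).

Definition C3 (p q : Pt) (r : R) : Prop :=
  exists x y ex ey, endpt p x ex /\ endpt q y ey /\ r = ex + dV x y + ey.

Lemma dcand_iff p q r : dcand cd p q r <-> C12 p q r \/ C3 p q r.
Proof. unfold dcand, C12, C3, endpt. tauto. Qed.

Lemma dcand_min p q : exists m, dcand cd p q m /\ forall r, dcand cd p q r -> m <= r.
Proof.
  apply (list_min _ [Rabs (pt p - pt q); Rabs (pt p - (1 - pt q));
     pt p + dV (pu p) (pu q) + pt q; pt p + dV (pu p) (pv q) + (1 - pt q);
     (1 - pt p) + dV (pv p) (pu q) + pt q; (1 - pt p) + dV (pv p) (pv q) + (1 - pt q)]).
  - intros r Hr. apply dcand_iff in Hr. destruct Hr as [[[_ [_ ->]]|[_ [_ ->]]]|[x [y [ex [ey [Hx [Hy ->]]]]]]].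
    + simpl; auto.
    + simpl; auto.
    + destruct Hx as [[-> ->]|[-> ->]]; destruct Hy as [[-> ->]|[-> ->]]; simpl; tauto.
  - exists (pt p + dV (pu p) (pu q) + pt q). apply dcand_iff. right.
    exists (pu p), (pu q), (pt p), (pt q). unfold endpt. tauto.
Qed.

Lemma dX_spec p q : dcand cd p q (dX p q) /\ forall r, dcand cd p q r -> dX p q <= r.
Proof.
  destruct (dcand_min p q) as [m [Hm Hl]]. unfold Defs.dX. rewrite (glb_min _ m Hm Hl). auto.
Qed.

Lemma dX_le p q r : dcand cd p q r -> dX p q <= r.
Proof. apply dX_spec. Qed.

Lemma dX_le3 p q x y ex ey : endpt p x ex -> endpt q y ey -> dX p q <= ex + dV x y + ey.
Proof. intros. apply dX_le, dcand_iff. right. exists x, y, ex, ey. auto. Qed.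

Lemma C12_ge0 p q r : C12 p q r -> 0 <= r.
Proof. intros [[_ [_ ->]]|[_ [_ ->]]]; apply Rabs_pos. Qed.

Lemma C3_ge0 p q r : C3 p q r -> 0 <= r.
Proof.
  intros [x [y [ex [ey [Hx [Hy ->]]]]]]. pose proof (endpt_range _ _ _ Hx).
  pose proof (endpt_range _ _ _ Hy). pose proof (dV_ge0 cd hSA x y). lra.
Qed.

Lemma dX_ge0 p q : 0 <= dX p q.
Proof.
  destruct (dX_spec p q) as [H _]. apply dcand_iff in H. destruct H.
  - eapply C12_ge0; eauto.
  - eapply C3_ge0; eauto.
Qed.

Lemma dX_refl p : dX p p = 0.
Proof.
  pose proof (dX_ge0 p p). assert (dX p p <= 0).
  { replace 0 with (Rabs (pt p - pt p)) by (rewrite Rminus_diag, Rabs_R0; auto).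
    apply dX_le, dcand_iff. left; left; auto. }
  lra.
Qed.

Lemma C12_sym p q r : C12 p q r -> C12 q p r.
Proof.
  intros [[H1 [H2 ->]]|[H1 [H2 ->]]].
  - left. repeat split; auto. apply Rabs_minus_sym.
  - right. repeat split; auto. f_equal. lra.
Qed.

Lemma dcand_sym p q r : dcand cd p q r -> dcand cd q p r.
Proof.
  rewrite !dcand_iff. intros [H|[x [y [ex [ey [Hx [Hy ->]]]]]]].
  - left; apply C12_sym; auto.
  - right. exists y, x, ey, ex. repeat split; auto. rewrite (dV_sym cd hSA x y). lra.
Qed.

Lemma dX_sym p q : dX p q = dX q p.
Proof.
  destruct (dX_spec p q) as [H1 H2]. destruct (dX_spec q p) as [H3 H4].
  apply Rle_antisym; [apply H2, dcand_sym; auto | apply H4, dcand_sym; auto].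
Qed.

Lemma C12_endpt p q r x ex : C12 p q r -> endpt q x ex -> exists ex', endpt p x ex' /\ ex' <= r + ex.
Proof.
  intros HC Hx. pose proof (pt_range p) as Rp. pose proof (pt_range q) as Rq.
  destruct HC as [[H1 [H2 ->]]|[H1 [H2 ->]]]; destruct Hx as [[-> ->]|[-> ->]].
  - exists (pt p). split; [left; auto|]. pose proof (Rle_abs (pt p - pt q)) as H. lra.
  - exists (1 - pt p). split; [right; auto|]. pose proof (Rle_abs (- (pt p - pt q))) as H. rewrite Rabs_Ropp in H. lra.
  - exists (1 - pt p). split; [right; auto|]. pose proof (Rle_abs (- (pt p - (1 - pt q)))) as H. rewrite Rabs_Ropp in H. lra.
  - exists (pt p). split; [left; auto|]. pose proof (Rle_abs (pt p - (1 - pt q))) as H. lra.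
Qed.

Lemma endpt_pair q y ey x ex : endpt q y ey -> endpt q x ex -> dV y x <= ey + ex.
Proof.
  intros Hy Hx. pose proof (endpt_range _ _ _ Hy). pose proof (endpt_range _ _ _ Hx).
  assert (Hadj : y = x \/ (adj cd y x /\ ey + ex = 1)).
  { destruct (pvalid cd q) as [[Ha _]|[Heq _]].
    - destruct Hy as [[-> ->]|[-> ->]]; destruct Hx as [[-> ->]|[-> ->]]; auto.
      + right; split; [auto|lra].
      + right; split; [apply adj_sym; auto|lra].
    - destruct Hy as [[-> _]|[-> _]]; destruct Hx as [[-> _]|[-> _]]; auto. }
  destruct Hadj as [->|[Ha Hs]].
  - rewrite (dV_refl cd hSA). lra.
  - pose proof (dV_adj cd hSA y x Ha). lra.
Qed.

Lemma abs3 a b c : Rabs (a - c) <= Rabs (a - b) + Rabs (b - c).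
Proof. replace (a - c) with ((a - b) + (b - c)) by ring. apply Rabs_triang. Qed.

Lemma C12_comp p q w r1 r2 : C12 p q r1 -> C12 q w r2 -> exists r, C12 p w r /\ r <= r1 + r2.
Proof.
  intros [[A1 [A2 ->]]|[A1 [A2 ->]]] [[B1 [B2 ->]]|[B1 [B2 ->]]].
  - eexists; split; [left; split; [congruence|split; [congruence|reflexivity]]|]. apply abs3.
  - eexists; split; [right; split; [congruence|split; [congruence|reflexivity]]|]. apply abs3.
  - eexists; split; [right; split; [congruence|split; [congruence|reflexivity]]|].
    pose proof (abs3 (pt p) (1 - pt q) (1 - pt w)).
    replace (1 - pt q - (1 - pt w)) with (pt w - pt q) in H by ring.
    rewrite (Rabs_minus_sym (pt w)) in H. lra.
  - eexists; split; [left; split; [congruence|split; [congruence|reflexivity]]|].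
    pose proof (abs3 (pt p) (1 - pt q) (pt w)).
    replace (1 - pt q - pt w) with (- (pt q - (1 - pt w))) in H by ring.
    rewrite Rabs_Ropp in H. lra.
Qed.

Lemma dX_tri p q w : dX p w <= dX p q + dX q w.
Proof.
  destruct (dX_spec p q) as [H1 _]. destruct (dX_spec q w) as [H2 _].
  set (r1 := dX p q) in *. set (r2 := dX q w) in *. clearbody r1 r2.
  apply dcand_iff in H1. apply dcand_iff in H2.
  destruct H1 as [H1|[x [y [ex [ey [Hx [Hy ->]]]]]]]; destruct H2 as [H2|[x' [y' [ex' [ey' [Hx' [Hy' ->]]]]]]].
  - destruct (C12_comp _ _ _ _ _ H1 H2) as [r [Hr Hle]].
    pose proof (dX_le p w r (proj2 (dcand_iff _ _ _) (or_introl Hr))). lra.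
  - destruct (C12_endpt _ _ _ _ _ H1 Hx') as [e1 [He1 Hle]].
    pose proof (dX_le3 _ _ _ _ _ _ He1 Hy'). lra.
  - destruct (C12_endpt _ _ _ _ _ (C12_sym _ _ _ H2) Hy) as [e1 [He1 Hle]].
    pose proof (dX_le3 _ _ _ _ _ _ Hx He1). lra.
  - pose proof (dX_le3 _ _ _ _ _ _ Hx Hy').
    pose proof (endpt_pair _ _ _ _ _ Hy Hx').
    pose proof (dV_tri cd hSA x y y'). pose proof (dV_tri cd hSA y x' y'). lra.
Qed.

Lemma dX_zero_l p p' q : dX p p' = 0 -> dX p q = dX p' q.
Proof.
  intros H. pose proof (dX_tri p p' q). pose proof (dX_tri p' p q). pose proof (dX_sym p p'). lra.
Qed.

Lemma dX_zero_r p q q' : dX q q' = 0 -> dX p q = dX p q'.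
Proof.
  intros H. rewrite (dX_sym p q), (dX_sym p q'). apply dX_zero_l; auto.
Qed.

End Metric.

Section Paths.
Variable cd : CuspData.
Variable hSA : StandingAssumptions cd.
Notation Vtx := (Vtx cd).
Notation Pt := (Pt cd).
Notation pu := (pu cd). Notation pv := (pv cd). Notation pt := (pt cd).
Notation dV := (dV cd). Notation dX := (dX cd).
Notation endpt := (endpt cd).

Definition vtx (v : Vtx) : Pt := mkPt cd v v 0 (or_intror (conj eq_refl eq_refl)).

Definition clamp (s : R) : R := Rmax 0 (Rmin 1 s).

Lemma clamp_range s : 0 <= clamp s <= 1.
Proof. unfold clamp, Rmax, Rmin. repeat destruct Rle_dec; lra. Qed.

Lemma clamp_id s : 0 <= s <= 1 -> clamp s = s.
Proof. unfold clamp, Rmax, Rmin. repeat destruct Rle_dec; lra. Qed.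

Lemma clamp_lip a b : Rabs (clamp a - clamp b) <= Rabs (a - b).
Proof.
  unfold clamp, Rmax, Rmin. apply Rabs_le.
  repeat destruct Rle_dec; unfold Rabs; destruct Rcase_abs; lra.
Qed.

Definition ept (u v : Vtx) (H : adj cd u v) (s : R) : Pt :=
  mkPt cd u v (clamp s) (or_introl (conj H (clamp_range s))).

Lemma adj_irrefl u : ~ adj cd u u.
Proof.
  unfold adj, adj0. destruct u; intros [H|H]; try tauto.
  - destruct H as [s [_ [_ H]]]; auto.
  - destruct H as [s [_ [_ H]]]; auto.
  - destruct H as [[_ [_ H]]|[_ [_ [H _]]]]; auto. lia.
  - destruct H as [[_ [_ H]]|[_ [_ [H _]]]]; auto. lia.
Qed.

Lemma dX_ept u v H a b : dX (ept u v H a) (ept u v H b) <= Rabs (a - b).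
Proof.
  eapply Rle_trans; [apply dX_le|apply clamp_lip].
  left. simpl. auto.
Qed.

Lemma dX_vtx_endpt p x ex : endpt p x ex -> dX p (vtx x) <= ex.
Proof.
  intros H. pose proof (dX_le3 cd p (vtx x) x x ex 0 H (or_introl (conj eq_refl eq_refl))).
  rewrite (dV_refl cd hSA) in H0. lra.
Qed.

Lemma dX_ept_u u v H s : dX (ept u v H s) (vtx u) <= clamp s.
Proof. apply dX_vtx_endpt. left. simpl. auto. Qed.

Lemma dX_ept_v u v H s : dX (ept u v H s) (vtx v) <= 1 - clamp s.
Proof. apply dX_vtx_endpt. right. simpl. auto. Qed.

Definition Lip (g : R -> Pt) (a b : R) : Prop :=
  forall s t, a <= s <= b -> a <= t <= b -> dX (g s) (g t) <= Rabs (s - t).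

Definition PathEx (p q : Pt) (D : R) : Prop :=
  exists g, 0 <= D /\ Lip g 0 D /\ dX (g 0) p = 0 /\ dX (g D) q = 0.

Lemma dX0 p q : dX p q <= 0 -> dX p q = 0.
Proof. pose proof (dX_ge0 cd hSA p q). lra. Qed.

Lemma PathEx_const p q D : 0 <= D -> dX p q = 0 -> PathEx p q D.
Proof.
  intros HD H. exists (fun _ => p). repeat split; auto.
  - intros s t _ _. rewrite (dX_refl cd hSA). apply Rabs_pos.
  - apply dX_refl; auto.
Qed.

Lemma PathEx_adj p q p' q' D : PathEx p q D -> dX p p' = 0 -> dX q q' = 0 -> PathEx p' q' D.
Proof.
  intros [g [HD [HL [H0 H1]]]] Hp Hq. exists g. repeat split; auto.
  - apply dX0. pose proof (dX_tri cd hSA (g 0) p p'). lra.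
  - apply dX0. pose proof (dX_tri cd hSA (g D) q q'). lra.
Qed.

Lemma PathEx_concat p m q a b : PathEx p m a -> PathEx m q b -> PathEx p q (a + b).
Proof.
  intros [g1 [Ha [L1 [A1 B1]]]] [g2 [Hb [L2 [A2 B2]]]].
  assert (Hj : dX (g1 a) (g2 0) = 0).
  { apply dX0. pose proof (dX_tri cd hSA (g1 a) m (g2 0)). rewrite (dX_sym cd hSA m) in H. lra. }
  exists (fun s => if Rle_dec s a then g1 s else g2 (s - a)). repeat split.
  - lra.
  - intros s t Hs Ht. destruct (Rle_dec s a); destruct (Rle_dec t a).
    + apply L1; lra.
    + pose proof (dX_tri cd hSA (g1 s) (g1 a) (g2 (t - a))) as E0.
      pose proof (dX_tri cd hSA (g1 a) (g2 0) (g2 (t - a))) as E1.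
      pose proof (L1 s a ltac:(lra) ltac:(lra)) as E2. pose proof (L2 0 (t - a) ltac:(lra) ltac:(lra)) as E3.
      rewrite Rabs_left1 in E2 by lra. rewrite Rabs_left1 in E3 by lra.
      rewrite Rabs_left1 by lra. lra.
    + pose proof (dX_tri cd hSA (g2 (s - a)) (g1 a) (g1 t)) as E0.
      pose proof (dX_tri cd hSA (g2 (s - a)) (g2 0) (g1 a)) as E1.
      pose proof (L1 a t ltac:(lra) ltac:(lra)) as E2. pose proof (L2 (s - a) 0 ltac:(lra) ltac:(lra)) as E3.
      rewrite (dX_sym cd hSA (g2 0)), Hj in E1.
      rewrite Rabs_right in E2 by lra. rewrite Rabs_right in E3 by lra.
      rewrite Rabs_right by lra. lra.
    + replace (s - t) with ((s - a) - (t - a)) by ring. apply L2; lra.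
  - destruct (Rle_dec 0 a); [auto|lra].
  - destruct (Rle_dec (a + b) a).
    + assert (b = 0) by lra. subst b. replace (a + 0) with a by ring.
      apply dX0. pose proof (dX_tri cd hSA (g1 a) (g2 0) q). rewrite Hj, B2 in H. lra.
    + replace (a + b - a) with b by ring. auto.
Qed.

Lemma PathEx_rev p q D : PathEx p q D -> PathEx q p D.
Proof.
  intros [g [HD [L [A B]]]]. exists (fun s => g (D - s)). repeat split; auto.
  - intros s t Hs Ht. replace (s - t) with ((D - t) - (D - s)) by ring.
    rewrite (dX_sym cd hSA). apply L; lra.
  - replace (D - 0) with D by ring. auto.
  - replace (D - D) with 0 by ring. auto.
Qed.

Lemma PathEx_ept u v H a b : 0 <= a <= 1 -> 0 <= b <= 1 -> PathEx (ept u v H a) (ept u v H b) (Rabs (a - b)).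
Proof.
  intros Ha Hb. destruct (Rle_dec a b).
  - exists (fun s => ept u v H (a + s)). rewrite Rabs_left1 by lra. repeat split.
    + lra.
    + intros s t _ _. eapply Rle_trans; [apply dX_ept|]. right; f_equal; ring.
    + apply dX0. rewrite Rplus_0_r. rewrite (dX_refl cd hSA); lra.
    + apply dX0. replace (a + - (a - b)) with b by ring. rewrite (dX_refl cd hSA); lra.
  - exists (fun s => ept u v H (a - s)). rewrite Rabs_right by lra. repeat split.
    + lra.
    + intros s t _ _. eapply Rle_trans; [apply dX_ept|]. right. rewrite <- Rabs_Ropp. f_equal; ring.
    + apply dX0. rewrite Rminus_0_r. rewrite (dX_refl cd hSA); lra.
    + apply dX0. replace (a - (a - b)) with b by ring. rewrite (dX_refl cd hSA); lra.
Qed.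

Lemma dX_ept_pt p H : dX (ept (pu p) (pv p) H (pt p)) p = 0.
Proof.
  apply dX0. eapply Rle_trans; [apply dX_le; left; simpl; repeat split|].
  rewrite clamp_id by apply (pt_range cd). rewrite Rminus_diag, Rabs_R0. lra.
Qed.

Lemma dX_ept_pt' p H : dX (ept (pv p) (pu p) H (1 - pt p)) p = 0.
Proof.
  apply dX0. eapply Rle_trans; [apply dX_le; right; left; simpl; repeat split|].
  pose proof (pt_range cd p). rewrite clamp_id by lra.
  replace (1 - pt p - (1 - pt p)) with 0 by ring. rewrite Rabs_R0. lra.
Qed.

Lemma PathEx_to_end p x ex : endpt p x ex -> PathEx p (vtx x) ex.
Proof.
  intros Hx. pose proof (endpt_range cd p x ex Hx) as Hr. pose proof (pt_range cd p) as Hp.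
  destruct (pvalid cd p) as [[Ha _]|[Heq Ht]].
  - destruct Hx as [[-> ->]|[-> ->]].
    + pose proof (PathEx_ept _ _ Ha (pt p) 0 Hp ltac:(lra)) as P.
      rewrite Rminus_0_r, Rabs_right in P by lra.
      eapply PathEx_adj; [apply P|apply dX_ept_pt|].
      apply dX0. eapply Rle_trans; [apply dX_ept_u|]. rewrite clamp_id; lra.
    + pose proof (PathEx_ept _ _ Ha (pt p) 1 Hp ltac:(lra)) as P.
      rewrite Rabs_left1 in P by lra. replace (- (pt p - 1)) with (1 - pt p) in P by ring.
      eapply PathEx_adj; [apply P|apply dX_ept_pt|].
      apply dX0. eapply Rle_trans; [apply dX_ept_v|]. rewrite clamp_id; lra.
  - apply PathEx_const; [lra|]. apply dX0.
    assert (Hxp : x = pu p) by (destruct Hx as [[-> _]|[-> _]]; congruence). subst x.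
    eapply Rle_trans; [apply (dX_vtx_endpt p (pu p) (pt p)); left; auto|]. lra.
Qed.

End Paths.

Section Geod.
Variable cd : CuspData.
Variable hSA : StandingAssumptions cd.
Notation Vtx := (Vtx cd).
Notation Pt := (Pt cd).
Notation pu := (pu cd). Notation pv := (pv cd). Notation pt := (pt cd).
Notation dV := (dV cd). Notation dX := (dX cd).
Notation endpt := (endpt cd).
Notation vtx := (vtx cd).
Notation ept := (ept cd).
Notation PathEx := (PathEx cd).

Lemma PathEx_edge u v (H : adj cd u v) : PathEx (vtx u) (vtx v) 1.
Proof.
  pose proof (PathEx_ept cd hSA u v H 0 1 ltac:(lra) ltac:(lra)) as P.
  replace (Rabs (0 - 1)) with 1 in P by (rewrite Rabs_left1 by lra; ring).
  eapply PathEx_adj; [exact hSA|apply P| |].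
  - apply (dX0 cd hSA). eapply Rle_trans; [apply dX_ept_u; exact hSA|]. rewrite clamp_id; lra.
  - apply (dX0 cd hSA). eapply Rle_trans; [apply dX_ept_v; exact hSA|]. rewrite clamp_id; lra.
Qed.

Lemma PathEx_walk n x y : walk cd n x y -> PathEx (vtx x) (vtx y) (INR n).
Proof.
  revert x; induction n; intros x H.
  - simpl in H. subst. apply PathEx_const; auto; [simpl; lra|]. apply dX_refl; auto.
  - simpl in H. destruct H as [w [Ha Hw]]. rewrite S_INR, Rplus_comm.
    eapply PathEx_concat; [exact hSA|apply PathEx_edge; eauto|apply IHn; auto].
Qed.

Lemma dX_ept_match u v H q : pu q = u -> pv q = v -> dX (ept u v H (pt q)) q = 0.
Proof.
  intros Hu Hv. apply (dX0 cd hSA). eapply Rle_trans; [apply dX_le; left; simpl; repeat split; eauto|].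
  rewrite clamp_id by apply (pt_range cd). rewrite Rminus_diag, Rabs_R0. lra.
Qed.

Lemma dX_ept_match' u v H q : pv q = u -> pu q = v -> dX (ept u v H (1 - pt q)) q = 0.
Proof.
  intros Hu Hv. apply (dX0 cd hSA). eapply Rle_trans; [apply dX_le; right; left; simpl; repeat split; eauto|].
  pose proof (pt_range cd q). rewrite clamp_id by lra.
  replace (1 - pt q - (1 - pt q)) with 0 by ring. rewrite Rabs_R0. lra.
Qed.

Lemma PathEx_C12 p q r : C12 cd p q r -> PathEx p q r.
Proof.
  intros HC. pose proof (C12_ge0 cd p q r HC) as Hr0.
  pose proof (pt_range cd p) as Rp. pose proof (pt_range cd q) as Rq.
  destruct (pvalid cd p) as [[Ha _]|[Heq Ht]].
  - destruct HC as [[H1 [H2 ->]]|[H1 [H2 ->]]].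
    + eapply PathEx_adj; [exact hSA|apply (PathEx_ept cd hSA _ _ Ha (pt p) (pt q)); auto|apply dX_ept_pt; auto|].
      apply dX_ept_match; auto.
    + eapply PathEx_adj; [exact hSA|apply (PathEx_ept cd hSA _ _ Ha (pt p) (1 - pt q)); auto; lra|apply dX_ept_pt; auto|].
      apply dX_ept_match'; auto.
  - assert (Hq : pu q = pv q /\ pu p = pu q /\ pv p = pv q) by (destruct HC as [[H1 [H2 _]]|[H1 [H2 _]]]; repeat split; congruence).
    destruct Hq as [Hq1 [Hq2 Hq3]].
    assert (Htq : pt q = 0).
    { destruct (pvalid cd q) as [[Ha _]|[_ Ht']]; auto. rewrite Hq1 in Ha. exfalso; eapply adj_irrefl; eauto. }
    apply PathEx_const; auto. apply (dX0 cd hSA).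
    eapply Rle_trans; [apply dX_le; left; repeat split; eauto|]. rewrite Ht, Htq, Rminus_0_r, Rabs_R0. lra.
Qed.

Lemma PathEx_dcand p q r : dcand cd p q r -> PathEx p q r.
Proof.
  intros H. apply dcand_iff in H. destruct H as [H|[x [y [ex [ey [Hx [Hy ->]]]]]]].
  - apply PathEx_C12; auto.
  - destruct (dV_spec cd hSA x y) as [n [Hn [Hd _]]]. rewrite Hd.
    eapply PathEx_concat; [exact hSA| |apply PathEx_rev; [exact hSA|apply PathEx_to_end; eauto]].
    eapply PathEx_concat; [exact hSA|apply PathEx_to_end; eauto|apply PathEx_walk; eauto].
Qed.

Lemma geodesic_exists p q : exists g, geodesic cd g 0 (dX p q) /\ g 0 = p /\ dX (g (dX p q)) q = 0.
Proof.
  set (D := dX p q).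
  destruct (PathEx_dcand p q D (proj1 (dX_spec cd p q))) as [g0 [HD [HL [H0 H1]]]].
  set (g := fun s => if Req_EM_T s 0 then p else g0 s).
  assert (Hg : forall s, 0 <= s <= D -> dX (g s) (g0 s) = 0).
  { intros s Hs. unfold g. destruct (Req_EM_T s 0) as [->|]; [rewrite (dX_sym cd hSA); auto|apply dX_refl; auto]. }
  assert (HL' : forall s t, 0 <= s <= D -> 0 <= t <= D -> dX (g s) (g t) <= Rabs (s - t)).
  { intros s t Hs Ht. rewrite (dX_zero_l cd hSA _ _ _ (Hg s Hs)), (dX_zero_r cd hSA _ _ _ (Hg t Ht)). apply HL; auto. }
  assert (Hg0 : g 0 = p) by (unfold g; destruct Req_EM_T; congruence).
  assert (HgD : dX (g D) q = 0) by (rewrite (dX_zero_l cd hSA _ _ _ (Hg D ltac:(lra))); auto).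
  exists g. split; [|split; auto].
  split; auto. intros s t Hs Ht. apply Rle_antisym; [apply HL'; auto|].
  assert (Hge : forall s t, 0 <= s <= D -> 0 <= t <= D -> s <= t -> t - s <= dX (g s) (g t)).
  { clear s t Hs Ht. intros s t Hs Ht Hst.
    pose proof (dX_tri cd hSA p (g s) q) as T1. pose proof (dX_tri cd hSA (g s) (g t) q) as T2.
    pose proof (dX_tri cd hSA (g t) (g D) q) as T3.
    pose proof (HL' 0 s ltac:(lra) Hs) as E1. rewrite Hg0 in E1.
    pose proof (HL' t D Ht ltac:(lra)) as E2.
    rewrite Rabs_left1 in E1 by lra. rewrite Rabs_left1 in E2 by lra. fold D in T1. lra. }
  destruct (Rle_dec s t).
  - rewrite Rabs_left1 by lra. pose proof (Hge s t Hs Ht r). lra.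
  - rewrite Rabs_right by lra. rewrite (dX_sym cd hSA). pose proof (Hge t s Ht Hs ltac:(lra)). lra.
Qed.

Lemma geodesic_rev g a b : geodesic cd g a b -> geodesic cd (fun s => g (a + b - s)) a b.
Proof.
  intros [Hab H]. split; auto. intros s t Hs Ht. rewrite H by lra. rewrite <- Rabs_Ropp. f_equal; ring.
Qed.

Lemma geodesic_le g a b s t : geodesic cd g a b -> a <= s <= b -> a <= t <= b -> dX (g s) (g t) = Rabs (s - t).
Proof. intros [_ H]; auto. Qed.

End Geod.

Lemma Rabs_le_inv a b : Rabs a <= b -> - b <= a <= b.
Proof. unfold Rabs; destruct Rcase_abs; intros; lra. Qed.

Section Depth.
Variable cd : CuspData.
Variable hSA : StandingAssumptions cd.
Notation Vtx := (Vtx cd).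
Notation Pt := (Pt cd).
Notation pu := (pu cd). Notation pv := (pv cd). Notation pt := (pt cd).
Notation dV := (dV cd). Notation dX := (dX cd).
Notation endpt := (endpt cd).
Notation vtx := (vtx cd).
Notation ept := (ept cd).
Notation depth := (depth cd).
Notation depthV := (depthV cd).

Lemma edge_depth_diff p : Rabs (depthV (pu p) - depthV (pv p)) <= 1.
Proof.
  destruct (pvalid cd p) as [[Ha _]|[Heq _]].
  - apply depthV_adj; auto.
  - rewrite Heq, Rminus_diag, Rabs_R0. lra.
Qed.

Lemma abs_mul_le a b c : Rabs a <= c -> Rabs b <= 1 -> Rabs (a * b) <= c.
Proof.
  intros H1 H2. rewrite Rabs_mult. pose proof (Rabs_pos a). pose proof (Rabs_pos b).
  apply Rle_trans with (Rabs a * 1); [apply Rmult_le_compat_l; auto|lra].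
Qed.

Lemma endpt_depth p x ex : endpt p x ex -> Rabs (depth p - depthV x) <= ex.
Proof.
  intros Hx. pose proof (edge_depth_diff p) as D. pose proof (pt_range cd p) as Rp.
  unfold Defs.depth. destruct Hx as [[-> ->]|[-> ->]].
  - replace ((1 - pt p) * depthV (pu p) + pt p * depthV (pv p) - depthV (pu p))
      with (pt p * (- (depthV (pu p) - depthV (pv p)))) by ring.
    apply abs_mul_le; [rewrite Rabs_right; lra|rewrite Rabs_Ropp; auto].
  - replace ((1 - pt p) * depthV (pu p) + pt p * depthV (pv p) - depthV (pv p))
      with ((1 - pt p) * (depthV (pu p) - depthV (pv p))) by ring.
    apply abs_mul_le; [rewrite Rabs_right; lra|auto].
Qed.

Lemma depth_lip p q : Rabs (depth p - depth q) <= dX p q.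
Proof.
  destruct (dX_spec cd p q) as [H _]. set (r := dX p q) in *. clearbody r.
  apply dcand_iff in H. destruct H as [H|[x [y [ex [ey [Hx [Hy ->]]]]]]].
  - pose proof (edge_depth_diff p) as D. unfold Defs.depth.
    destruct H as [[H1 [H2 ->]]|[H1 [H2 ->]]]; rewrite <- ?H1, <- ?H2.
    + replace ((1 - pt p) * depthV (pu p) + pt p * depthV (pv p) - ((1 - pt q) * depthV (pu p) + pt q * depthV (pv p)))
        with ((pt p - pt q) * (- (depthV (pu p) - depthV (pv p)))) by ring.
      apply abs_mul_le; [lra|rewrite Rabs_Ropp; auto].
    + replace ((1 - pt p) * depthV (pu p) + pt p * depthV (pv p) - ((1 - pt q) * depthV (pv p) + pt q * depthV (pu p)))
        with ((pt p - (1 - pt q)) * (- (depthV (pu p) - depthV (pv p)))) by ring.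
      apply abs_mul_le; [lra|rewrite Rabs_Ropp; auto].
  - pose proof (endpt_depth _ _ _ Hx). pose proof (endpt_depth _ _ _ Hy).
    pose proof (depthV_lip cd hSA x y). pose proof (depthV_lip cd hSA y x).
    rewrite (dV_sym cd hSA y x) in H2.
    apply Rabs_le. apply Rabs_le_inv in H. apply Rabs_le_inv in H0. lra.
Qed.

Lemma depth_lip' p q : depth q >= depth p - dX p q.
Proof. pose proof (depth_lip p q). apply Rabs_le_inv in H. lra. Qed.

Lemma depth_zero p q : dX p q = 0 -> depth p = depth q.
Proof. intros H. pose proof (depth_lip p q). rewrite H in H0. apply Rabs_le_inv in H0. lra. Qed.

Lemma depth_vtx v : depth (vtx v) = depthV v.
Proof. unfold Defs.depth. simpl. ring. Qed.

Lemma depth_ept u v H s : depth (ept u v H s) = (1 - clamp s) * depthV u + clamp s * depthV v.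
Proof. reflexivity. Qed.

Lemma depth_ge0 p : 0 <= depth p.
Proof.
  unfold Defs.depth. pose proof (pt_range cd p). pose proof (depthV_ge0 cd hSA (pu p)).
  pose proof (depthV_ge0 cd hSA (pv p)). nra.
Qed.

End Depth.

Lemma lub_approx (E : R -> Prop) m y : is_lub E m -> y < m -> exists x, E x /\ y < x.
Proof.
  intros [Hub Hl] Hy. apply NNPP. intro Hno.
  assert (is_upper_bound E y).
  { intros x Hx. destruct (Rle_dec x y); auto. exfalso; apply Hno; exists x; split; auto; lra. }
  specialize (Hl y H). lra.
Qed.

Section Conn.
Variable cd : CuspData.
Variable hSA : StandingAssumptions cd.
Notation Pt := (Pt cd).
Notation dX := (dX cd).

Definition img (g : R -> Pt) (a b : R) : Pt -> Prop := fun p => exists t, a <= t <= b /\ p = g t.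

Lemma Lip_conn_core (g : R -> Pt) a b (U V : Pt -> Prop) s0 t0 :
  (forall s t, a <= s <= b -> a <= t <= b -> dX (g s) (g t) <= Rabs (s - t)) ->
  Xopen cd U -> Xopen cd V -> (forall p, img g a b p -> U p \/ V p) ->
  (forall p, img g a b p -> U p -> V p -> False) ->
  a <= s0 <= b -> a <= t0 <= b -> s0 <= t0 -> U (g s0) -> V (g t0) -> False.
Proof.
  intros HL HU HV Hcov Hdis Hs0 Ht0 Hst Us Vt.
  set (E := fun x => s0 <= x <= t0 /\ forall y, s0 <= y <= x -> U (g y)).
  assert (HEb : bound E) by (exists t0; intros x [Hx _]; lra).
  assert (HEn : exists x, E x).
  { exists s0. split; [lra|]. intros y Hy. replace y with s0 by lra. auto. }
  destruct (completeness E HEb HEn) as [m Hm].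
  assert (Hm1 : s0 <= m) by (apply (proj1 Hm); unfold E; split; [lra|]; intros y Hy; replace y with s0 by lra; auto).
  assert (Hm2 : m <= t0) by (apply (proj2 Hm); intros x [Hx _]; lra).
  assert (HA : forall y, s0 <= y < m -> U (g y)).
  { intros y Hy. destruct (lub_approx E m y Hm (proj2 Hy)) as [x [[Hx1 Hx2] Hxy]]. apply Hx2; lra. }
  assert (Himg : forall t, s0 <= t <= t0 -> img g a b (g t)) by (intros t Ht; exists t; split; [lra|auto]).
  destruct (Hcov (g m) (Himg m ltac:(lra))) as [Um|Vm].
  - destruct (HU _ Um) as [eps [Heps Hball]].
    destruct (Req_dec m t0) as [->|Hne].
    + apply (Hdis (g t0)); auto.
    + set (m' := Rmin t0 (m + eps / 2)).
      assert (Hm' : m < m' <= t0) by (unfold m', Rmin; destruct Rle_dec; lra).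
      assert (E m').
      { split; [lra|]. intros y Hy. destruct (Rlt_dec y m); [apply HA; lra|].
        apply Hball. eapply Rle_lt_trans; [apply HL; lra|].
        rewrite Rabs_left1 by lra. unfold m', Rmin in *; destruct Rle_dec; lra. }
      pose proof (proj1 Hm m' H). lra.
  - destruct (HV _ Vm) as [eps [Heps Hball]].
    destruct (Req_dec m s0) as [->|Hne].
    + apply (Hdis (g s0)); auto.
    + set (y := Rmax s0 (m - eps / 2)).
      assert (Hy : s0 <= y < m) by (unfold y, Rmax; destruct Rle_dec; lra).
      apply (Hdis (g y)); [apply Himg; lra|apply HA; auto|].
      apply Hball. eapply Rle_lt_trans; [apply HL; lra|].
      rewrite Rabs_right by lra. unfold y, Rmax in *; destruct Rle_dec; lra.
Qed.

Lemma Lip_conn (g : R -> Pt) a b :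
  (forall s t, a <= s <= b -> a <= t <= b -> dX (g s) (g t) <= Rabs (s - t)) ->
  Xconnected cd (img g a b).
Proof.
  intros HL [U [V [HU [HV [Hcov [[p [[s0 [Hs0 ->]] Up]] [[q [[t0 [Ht0 ->]] Vq]] Hdis]]]]]]].
  destruct (Rle_dec s0 t0).
  - eapply (Lip_conn_core g a b U V s0 t0); eauto.
  - assert (Hc' : forall x, img g a b x -> V x \/ U x) by (intros x Hx; destruct (Hcov x Hx); auto).
    assert (Hd' : forall x, img g a b x -> V x -> U x -> False) by (intros x Hx H1 H2; eapply Hdis; eauto).
    exact (Lip_conn_core g a b V U t0 s0 HL HV HU Hc' Hd' Ht0 Hs0 ltac:(lra) Vq Up).
Qed.

Lemma geod_conn g a b : geodesic cd g a b -> Xconnected cd (img g a b).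
Proof. intros [_ H]. apply Lip_conn. intros. rewrite H; auto; lra. Qed.

Lemma conn_union (A B : Pt -> Prop) : Xconnected cd A -> Xconnected cd B -> (exists p, A p /\ B p) ->
  Xconnected cd (fun p => A p \/ B p).
Proof.
  intros HA HB [c [Ac Bc]] [U [V [HU [HV [Hcov [[p [Hp Up]] [[q [Hq Vq]] Hdis]]]]]]].
  assert (NA : ~ ((exists x, A x /\ U x) /\ (exists x, A x /\ V x))).
  { intros [H1 H2]. apply HA. exists U, V. repeat split; auto.
    all: intros x Hx; first [apply Hcov; auto | apply Hdis; auto]. }
  assert (NB : ~ ((exists x, B x /\ U x) /\ (exists x, B x /\ V x))).
  { intros [H1 H2]. apply HB. exists U, V. repeat split; auto.
    all: intros x Hx; first [apply Hcov; auto | apply Hdis; auto]. }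
  destruct (Hcov c (or_introl Ac)) as [Uc|Vc].
  - destruct Hq as [Aq|Bq].
    + apply NA; split; eauto.
    + apply NB; split; eauto.
  - destruct Hp as [Ap|Bp].
    + apply NA; split; eauto.
    + apply NB; split; eauto.
Qed.

Lemma conn_pair p q : dX p q = 0 -> Xconnected cd (fun x => x = p \/ x = q).
Proof.
  intros Hpq [U [V [HU [HV [Hcov [[a [Ha Ua]] [[b [Hb Vb]] Hdis]]]]]]].
  unfold Xopen in *.
  assert (Hqp : dX q p = 0) by (rewrite (dX_sym cd hSA); auto).
  assert (HO : forall W : Pt -> Prop, Xopen cd W -> (W p <-> W q)).
  { intros W HW. split; intros HWx.
    - destruct (HW _ HWx) as [eps [He Hb2]]. apply Hb2. rewrite ?Hpq, ?Hqp. lra.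
    - destruct (HW _ HWx) as [eps [He Hb2]]. apply Hb2. rewrite ?Hpq, ?Hqp. lra. }
  assert (Up : U p) by (destruct Ha as [ -> | -> ]; auto; apply (HO U HU); auto).
  assert (Vp : V p) by (destruct Hb as [ -> | -> ]; auto; apply (HO V HV); auto).
  apply (Hdis p); auto.
Qed.

Lemma maximal_absorb (A C S : Pt -> Prop) : component cd A C -> Xconnected cd S -> (forall x, S x -> A x) ->
  (exists p, C p /\ S p) -> forall x, S x -> C x.
Proof.
  intros [HCA [_ [HCc HCm]]] HS HSA Hc x Hx.
  apply (HCm (fun p => C p \/ S p)); [intros p Hp; auto|intros p [Hp|Hp]; auto|
    apply conn_union; auto; destruct Hc as [p [? ?]]; eauto|auto].
Qed.

Lemma absorb0 (A C : Pt -> Prop) p q : component cd A C -> C p -> dX p q = 0 -> A q -> C q.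
Proof.
  intros Hc Cp Hpq Aq. apply (maximal_absorb A C (fun x => x = p \/ x = q)).
  - auto.
  - apply conn_pair; auto.
  - intros x [ -> | -> ]; auto. destruct Hc as [HCA _]; auto.
  - exists p; auto.
  - auto.
Qed.

End Conn.

Lemma Rabs_lt_inv a b : Rabs a < b -> - b < a < b.
Proof. unfold Rabs; destruct Rcase_abs; intros; lra. Qed.

Section Horo.
Variable cd : CuspData.
Variable hSA : StandingAssumptions cd.
Notation Vtx := (Vtx cd).
Notation Pt := (Pt cd).
Notation pu := (pu cd). Notation pv := (pv cd). Notation pt := (pt cd).
Notation dV := (dV cd). Notation dX := (dX cd).
Notation endpt := (endpt cd).
Notation vtx := (vtx cd).
Notation ept := (ept cd).
Notation depth := (depth cd).
Notation depthV := (depthV cd).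

Lemma local_vertex p q x : endpt p x 0 -> dX p q < 1/2 ->
  (pu q = x /\ pt q < 1/2) \/ (pv q = x /\ pt q > 1/2).
Proof.
  intros Hx Hd. destruct (dX_spec cd p q) as [H _]. set (r := dX p q) in *. clearbody r.
  pose proof (pt_range cd p) as Rp. pose proof (pt_range cd q) as Rq.
  apply dcand_iff in H. destruct H as [H|[x' [y [ex [ey [Hx' [Hy ->]]]]]]].
  - destruct H as [[H1 [H2 ->]]|[H1 [H2 ->]]]; apply Rabs_lt_inv in Hd;
    destruct Hx as [[-> E]|[-> E]].
    + left; split; [congruence|lra].
    + right; split; [congruence|lra].
    + right; split; [congruence|lra].
    + left; split; [congruence|lra].
  - pose proof (endpt_range cd _ _ _ Hx') as R1. pose proof (endpt_range cd _ _ _ Hy) as R2.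
    pose proof (dV_ge0 cd hSA x' y) as R3.
    assert (Hxy : x' = y) by (apply (dV_lt1 cd hSA); lra). subst y.
    assert (Hxx : x' = x).
    { destruct Hx as [[-> E]|[-> E]]; destruct Hx' as [[-> E']|[-> E']]; auto; lra. }
    subst x'. destruct Hy as [[-> E]|[-> E]].
    + left; split; [auto|lra].
    + right; split; [auto|lra].
Qed.

Lemma local_interior p q : 0 < pt p < 1 -> dX p q < Rmin (pt p) (1 - pt p) ->
  ((pu q = pu p /\ pv q = pv p) \/ (pu q = pv p /\ pv q = pu p)) /\ 0 < pt q < 1.
Proof.
  intros Hp Hd. destruct (dX_spec cd p q) as [H _]. set (r := dX p q) in *. clearbody r.
  pose proof (pt_range cd q) as Rq.
  assert (Hm1 : Rmin (pt p) (1 - pt p) <= pt p) by apply Rmin_l.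
  assert (Hm2 : Rmin (pt p) (1 - pt p) <= 1 - pt p) by apply Rmin_r.
  apply dcand_iff in H. destruct H as [H|[x' [y [ex [ey [Hx' [Hy ->]]]]]]].
  - destruct H as [[H1 [H2 ->]]|[H1 [H2 ->]]]; apply Rabs_lt_inv in Hd.
    + split; [left; auto|lra].
    + split; [right; auto|lra].
  - pose proof (endpt_range cd _ _ _ Hy) as R2.
    pose proof (dV_ge0 cd hSA x' y) as R3. exfalso.
    destruct Hx' as [[_ ->]|[_ ->]]; lra.
Qed.

Lemma fullsub_closed (W : Vtx -> Prop) p :
  (forall eps, 0 < eps -> exists q, fullsub cd W q /\ dX p q < eps) -> fullsub cd W p.
Proof.
  intros Hcl. pose proof (pt_range cd p) as Rp. unfold fullsub.
  destruct (Req_dec (pt p) 0) as [E0|N0].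
  - left. split; auto. destruct (Hcl (1/2) ltac:(lra)) as [q [Hq Hd]].
    destruct (local_vertex p q (pu p) (or_introl (conj eq_refl (eq_sym E0))) Hd) as [[E Hl]|[E Hl]];
    unfold fullsub in Hq; rewrite <- E; destruct Hq as [[Ht Hw]|[[Ht Hw]|[Hw1 Hw2]]]; auto; lra.
  - destruct (Req_dec (pt p) 1) as [E1|N1].
    + right; left. split; auto. destruct (Hcl (1/2) ltac:(lra)) as [q [Hq Hd]].
      assert (Hx : endpt p (pv p) 0) by (right; split; auto; lra).
      destruct (local_vertex p q (pv p) Hx Hd) as [[E Hl]|[E Hl]];
      unfold fullsub in Hq; rewrite <- E; destruct Hq as [[Ht Hw]|[[Ht Hw]|[Hw1 Hw2]]]; auto; lra.
    + right; right.
      assert (Hpos : 0 < Rmin (pt p) (1 - pt p)) by (apply Rmin_glb_lt; lra).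
      destruct (Hcl _ Hpos) as [q [Hq Hd]].
      destruct (local_interior p q ltac:(lra) Hd) as [Ho Ht].
      unfold fullsub in Hq. destruct Hq as [[Ht' _]|[[Ht' _]|[Hw1 Hw2]]]; try lra.
      destruct Ho as [[E1' E2']|[E1' E2']]; rewrite <- ?E1', <- ?E2'; auto.
Qed.

End Horo.

Section Comp.
Variable cd : CuspData.
Variable hSA : StandingAssumptions cd.
Notation Vtx := (Vtx cd).
Notation Pt := (Pt cd).
Notation pu := (pu cd). Notation pv := (pv cd). Notation pt := (pt cd).
Notation dV := (dV cd). Notation dX := (dX cd).
Notation endpt := (endpt cd).
Notation vtx := (vtx cd).
Notation ept := (ept cd).
Notation depth := (depth cd).
Notation depthV := (depthV cd).
Notation img := (img cd).

Definition Apos : Pt -> Prop := fun p => 0 < depth p.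

Variable C : Pt -> Prop.
Variable hC : component cd Apos C.

Definition W0 : Vtx -> Prop := fun v => closure cd C (vtx v).

Lemma C_Apos p : C p -> 0 < depth p.
Proof. destruct hC as [H _]. apply H. Qed.

Lemma closure_dX0 q q' : closure cd C q -> dX q q' = 0 -> closure cd C q'.
Proof.
  intros Hq H eps Heps. destruct (Hq eps Heps) as [p [Cp Hp]]. exists p; split; auto.
  pose proof (dX_tri cd hSA p q q'). lra.
Qed.

Lemma C_closure p : C p -> closure cd C p.
Proof. intros Cp eps He. exists p. split; auto. rewrite (dX_refl cd hSA). auto. Qed.

Lemma ept_lip u v H a b : dX (ept u v H a) (ept u v H b) <= Rabs (a - b).
Proof. apply dX_ept. Qed.

Lemma edge_in_C u v (H : adj cd u v) s0 p : 0 < s0 < 1 -> C p -> dX p (ept u v H s0) = 0 ->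
  forall s, 0 < s < 1 -> C (ept u v H s).
Proof.
  intros Hs0 Cp Hd s Hs.
  pose proof (depthV_ge0 cd hSA u) as Du. pose proof (depthV_ge0 cd hSA v) as Dv.
  assert (Hdep : forall r, 0 < r < 1 -> 0 < depth (ept u v H r)).
  { assert (0 < depth (ept u v H s0)) by (rewrite <- (depth_zero cd hSA _ _ Hd); apply C_Apos; auto).
    rewrite depth_ept, clamp_id in H0 by lra.
    intros r Hr. rewrite depth_ept, clamp_id by lra.
    destruct (Rlt_dec 0 (depthV u)).
    - assert (0 < (1 - r) * depthV u) by (apply Rmult_lt_0_compat; lra).
      assert (0 <= r * depthV v) by (apply Rmult_le_pos; lra). lra.
    - assert (depthV u = 0) by lra. rewrite H1 in *.
      assert (0 < depthV v) by nra. assert (0 < r * depthV v) by (apply Rmult_lt_0_compat; lra). lra. }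
  assert (C0 : C (ept u v H s0)) by (eapply absorb0; eauto; apply Hdep; auto).
  set (a := Rmin s0 s). set (b := Rmax s0 s).
  assert (Ha : 0 < a) by (unfold a, Rmin; destruct Rle_dec; lra).
  assert (Hb : b < 1) by (unfold b, Rmax; destruct Rle_dec; lra).
  assert (Hab1 : a <= s0 <= b) by (unfold a, b, Rmin, Rmax; destruct Rle_dec; lra).
  assert (Hab2 : a <= s <= b) by (unfold a, b, Rmin, Rmax; destruct Rle_dec; lra).
  apply (maximal_absorb cd Apos C (img (ept u v H) a b) hC).
  - apply Lip_conn. intros. apply dX_ept.
  - intros x [r [Hr ->]]. apply Hdep. lra.
  - exists (ept u v H s0). split; auto. exists s0; auto.
  - exists s; auto.
Qed.

Lemma closure_fullsub q : closure cd C q -> fullsub cd W0 q.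
Proof.
  intros Hq. pose proof (pt_range cd q) as Rq. unfold fullsub, W0.
  destruct (Req_dec (pt q) 0) as [E0|N0].
  - left. split; auto. eapply closure_dX0; eauto. apply (dX0 cd hSA).
    apply (dX_vtx_endpt cd hSA). left; auto.
  - destruct (Req_dec (pt q) 1) as [E1|N1].
    + right; left. split; auto. eapply closure_dX0; eauto. apply (dX0 cd hSA).
      eapply Rle_trans; [apply (dX_vtx_endpt cd hSA); right; split; reflexivity|]. lra.
    + right; right.
      assert (Ha : adj cd (pu q) (pv q)) by (destruct (pvalid cd q) as [[? _]|[_ ?]]; auto; lra).
      assert (Hpos : 0 < Rmin (pt q) (1 - pt q)) by (apply Rmin_glb_lt; lra).
      destruct (Hq _ Hpos) as [p [Cp Hd]]. rewrite (dX_sym cd hSA) in Hd.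
      destruct (local_interior cd hSA q p ltac:(lra) Hd) as [Ho Hpt].
      assert (Hall : forall s, 0 < s < 1 -> C (ept (pu q) (pv q) Ha s)).
      { destruct Ho as [[E1' E2']|[E1' E2']].
        - apply (edge_in_C _ _ Ha (pt p) p); auto. rewrite (dX_sym cd hSA).
          apply dX_ept_match; auto.
        - apply (edge_in_C _ _ Ha (1 - pt p) p); try lra; auto. rewrite (dX_sym cd hSA).
          apply dX_ept_match'; auto. }
      split.
      * intros eps He. set (s := Rmin (eps / 2) (1/2)).
        assert (Hs : 0 < s < 1 /\ s <= eps / 2) by (unfold s, Rmin; destruct Rle_dec; lra).
        exists (ept (pu q) (pv q) Ha s). split; [apply Hall; lra|].
        eapply Rle_lt_trans; [apply dX_ept_u; exact hSA|]. rewrite clamp_id by lra. lra.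
      * intros eps He. set (s := Rmax (1 - eps / 2) (1/2)).
        assert (Hs : 0 < s < 1 /\ 1 - eps / 2 <= s) by (unfold s, Rmax; destruct Rle_dec; lra).
        exists (ept (pu q) (pv q) Ha s). split; [apply Hall; lra|].
        eapply Rle_lt_trans; [apply dX_ept_v; exact hSA|]. rewrite clamp_id by lra. lra.
Qed.

Lemma vtx_in_C v : closure cd C (vtx v) -> 0 < depthV v -> C (vtx v).
Proof.
  intros Hcl Hd. destruct (Hcl _ Hd) as [p [Cp Hp]].
  destruct (geodesic_exists cd hSA p (vtx v)) as [g [Hg [Hg0 HgD]]].
  set (D := dX p (vtx v)) in *.
  assert (HD : 0 <= D) by apply (dX_ge0 cd hSA).
  assert (CgD : C (g D)).
  { apply (maximal_absorb cd Apos C (img g 0 D) hC).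
    - apply geod_conn; auto.
    - intros x [s [Hs ->]]. unfold Apos.
      pose proof (depth_lip' cd hSA (vtx v) (g s)). rewrite depth_vtx in H.
      pose proof (dX_tri cd hSA (vtx v) (g D) (g s)).
      rewrite (dX_sym cd hSA (vtx v) (g D)), HgD in H0. rewrite (geodesic_le cd g 0 D D s Hg) in H0 by lra.
      rewrite Rabs_right in H0 by lra. lra.
    - exists p. split; auto. exists 0. split; [lra|auto].
    - exists D. split; [lra|auto]. }
  eapply absorb0; eauto. unfold Apos. rewrite depth_vtx; auto.
Qed.

Lemma deep_in_C p : fullsub cd W0 p -> 0 < depth p -> C p.
Proof.
  intros Hf Hd. pose proof (pt_range cd p) as Rp. unfold fullsub, W0 in Hf.
  destruct (Req_dec (pt p) 0) as [E0|N0].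
  - assert (Hw : closure cd C (vtx (pu p))) by (destruct Hf as [[_ ?]|[[? _]|[? _]]]; auto; lra).
    assert (Hz : dX p (vtx (pu p)) = 0) by (apply (dX0 cd hSA); apply (dX_vtx_endpt cd hSA); left; auto).
    apply (absorb0 cd hSA Apos C (vtx (pu p))); auto.
    + apply vtx_in_C; auto. rewrite <- depth_vtx. rewrite <- (depth_zero cd hSA _ _ Hz). auto.
    + rewrite (dX_sym cd hSA); auto.
  - destruct (Req_dec (pt p) 1) as [E1|N1].
    + assert (Hw : closure cd C (vtx (pv p))) by (destruct Hf as [[? _]|[[_ ?]|[_ ?]]]; auto; lra).
      assert (Hz : dX p (vtx (pv p)) = 0).
      { apply (dX0 cd hSA). eapply Rle_trans; [apply (dX_vtx_endpt cd hSA); right; split; reflexivity|]. lra. }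
      apply (absorb0 cd hSA Apos C (vtx (pv p))); auto.
      * apply vtx_in_C; auto. rewrite <- depth_vtx. rewrite <- (depth_zero cd hSA _ _ Hz). auto.
      * rewrite (dX_sym cd hSA); auto.
    + destruct Hf as [[? _]|[[? _]|[Wu Wv]]]; try lra.
      assert (Ha : adj cd (pu p) (pv p)) by (destruct (pvalid cd p) as [[? _]|[_ ?]]; auto; lra).
      pose proof (depthV_ge0 cd hSA (pu p)) as Du. pose proof (depthV_ge0 cd hSA (pv p)) as Dv.
      assert (Hp : dX (ept (pu p) (pv p) Ha (pt p)) p = 0) by (apply dX_ept_match; auto).
      unfold Defs.depth in Hd.
      destruct (Rlt_dec 0 (depthV (pu p))) as [Pu|Pu].
      * assert (Cu : C (vtx (pu p))) by (apply vtx_in_C; auto).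
        assert (C0 : C (ept (pu p) (pv p) Ha 0)).
        { apply (absorb0 cd hSA Apos C (vtx (pu p))); auto.
          - apply (dX0 cd hSA). rewrite (dX_sym cd hSA). eapply Rle_trans; [apply dX_ept_u; exact hSA|].
            rewrite clamp_id; lra.
          - unfold Apos. rewrite depth_ept, clamp_id by lra. lra. }
        assert (Ct : C (ept (pu p) (pv p) Ha (pt p))).
        { apply (maximal_absorb cd Apos C (img (ept (pu p) (pv p) Ha) 0 (pt p)) hC).
          - apply Lip_conn. intros. apply dX_ept.
          - intros x [r [Hr ->]]. unfold Apos. rewrite depth_ept, clamp_id by lra.
            assert (0 < (1 - r) * depthV (pu p)) by (apply Rmult_lt_0_compat; lra).
            assert (0 <= r * depthV (pv p)) by (apply Rmult_le_pos; lra). lra.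
          - exists (ept (pu p) (pv p) Ha 0). split; auto. exists 0. split; [lra|auto].
          - exists (pt p). split; [lra|auto]. }
        eapply absorb0; eauto; unfold Apos, Defs.depth; auto.
      * assert (Pv : 0 < depthV (pv p)) by nra.
        assert (Cv : C (vtx (pv p))) by (apply vtx_in_C; auto).
        assert (C1 : C (ept (pu p) (pv p) Ha 1)).
        { apply (absorb0 cd hSA Apos C (vtx (pv p))); auto.
          - apply (dX0 cd hSA). rewrite (dX_sym cd hSA). eapply Rle_trans; [apply dX_ept_v; exact hSA|].
            rewrite clamp_id; lra.
          - unfold Apos. rewrite depth_ept, clamp_id by lra. lra. }
        assert (Ct : C (ept (pu p) (pv p) Ha (pt p))).
        { apply (maximal_absorb cd Apos C (img (ept (pu p) (pv p) Ha) (pt p) 1) hC).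
          - apply Lip_conn. intros. apply dX_ept.
          - intros x [r [Hr ->]]. unfold Apos. rewrite depth_ept, clamp_id by lra.
            assert (0 < r * depthV (pv p)) by (apply Rmult_lt_0_compat; lra).
            assert (0 <= (1 - r) * depthV (pu p)) by (apply Rmult_le_pos; lra). lra.
          - exists (ept (pu p) (pv p) Ha 1). split; auto. exists 1. split; [lra|auto].
          - exists (pt p). split; [lra|auto]. }
        eapply absorb0; eauto; unfold Apos, Defs.depth; auto.
Qed.

End Comp.

Section HB.
Variable cd : CuspData.
Variable hSA : StandingAssumptions cd.
Notation Vtx := (Vtx cd).
Notation Pt := (Pt cd).
Notation dX := (dX cd).
Notation depth := (depth cd).

Definition comp_of (A : Pt -> Prop) (p0 : Pt) : Pt -> Prop :=
  fun p => exists S, Xconnected cd S /\ (forall x, S x -> A x) /\ S p0 /\ S p.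

Lemma conn_single p0 : Xconnected cd (fun p => p = p0).
Proof.
  intros [U [V [_ [_ [_ [[a [-> Ua]] [[b [-> Vb]] Hdis]]]]]]]. apply (Hdis p0); auto.
Qed.

Lemma comp_of_component A p0 : A p0 -> component cd A (comp_of A p0).
Proof.
  intros Hp0. split; [|split; [|split]].
  - intros p [S [_ [HS [_ Sp]]]]. auto.
  - exists p0. exists (fun p => p = p0). repeat split; auto. apply conn_single.
    intros x ->; auto.
  - intros [U [V [HU [HV [Hcov [[a [Ca Ua]] [[b [Cb Vb]] Hdis]]]]]]].
    assert (Hside : forall S, Xconnected cd S -> (forall x, S x -> A x) -> S p0 -> forall x, S x ->
       (U p0 -> U x /\ ~ V x) /\ (V p0 -> V x /\ ~ U x)).
    { intros S HS HSA HS0 x Sx.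
      assert (HcS : forall y, S y -> comp_of A p0 y) by (intros y Sy; exists S; auto).
      assert (N : ~ ((exists y, S y /\ U y) /\ (exists y, S y /\ V y))).
      { intros [E1 E2]. apply HS. exists U, V. repeat split; auto.
        all: intros y Hy; first [apply Hcov; auto | apply Hdis; auto]. }
      split; intros H0; split.
      - destruct (Hcov x (HcS x Sx)); auto. exfalso; apply N; split; eauto.
      - intros Vx. apply N; split; eauto.
      - destruct (Hcov x (HcS x Sx)); auto. exfalso; apply N; split; eauto.
      - intros Ux. apply N; split; eauto. }
    destruct Ca as [Sa [HSa [HSAa [Sa0 Saa]]]]. destruct Cb as [Sb [HSb [HSAb [Sb0 Sbb]]]].
    destruct (Hcov p0) as [U0|V0]; [exists (fun p => p = p0); repeat split; auto; [apply conn_single|intros x ->; auto]|..].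
    + apply (proj2 (proj1 (Hside Sb HSb HSAb Sb0 b Sbb) U0)); auto.
    + apply (proj2 (proj2 (Hside Sa HSa HSAa Sa0 a Saa) V0)); auto.
  - intros C' HC'1 HC'2 HC'3 p Hp. exists C'. repeat split; auto. apply HC'1.
    exists (fun p => p = p0). repeat split; auto. apply conn_single. intros x ->; auto.
Qed.

Lemma make_horoball C : component cd (Apos cd) C -> is_horoball cd (fullsub cd (W0 cd C)).
Proof.
  intros hC. exists C. split; [exact hC|]. exists (W0 cd C). split; [|split].
  - intros q Hq. apply (closure_fullsub cd hSA C hC); auto.
  - intros W' HW' v Hv. specialize (HW' (vtx cd v) Hv).
    unfold fullsub in HW'; simpl in HW'. destruct HW' as [[_ ?]|[[_ ?]|[? _]]]; auto.
  - intros p; tauto.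
Qed.

Lemma horoball_props H : is_horoball cd H ->
  exists C, component cd (Apos cd) C /\ (forall p, H p -> 0 < depth p -> C p) /\
    (forall q, closure cd C q -> H q) /\ exists W, forall p, H p <-> fullsub cd W p.
Proof.
  intros [C [hC [W [Hcl [Hmin HH]]]]].
  exists C. split; [exact hC|]. split; [|split; [|exists W; auto]].
  - intros p Hp Hd. apply (deep_in_C cd hSA C hC); auto.
    apply HH in Hp. unfold fullsub in *.
    assert (Hsub : forall v, W v -> W0 cd C v) by (apply Hmin; intros q Hq; apply (closure_fullsub cd hSA C hC); auto).
    destruct Hp as [[? ?]|[[? ?]|[? ?]]]; auto.
  - intros q Hq. apply HH. apply Hcl; auto.
Qed.

Lemma khoroball_in_horoball k H : (1 <= k)%nat -> is_khoroball cd k H ->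
  exists H', is_horoball cd H' /\ forall p, H p -> H' p.
Proof.
  intros Hk hH. destruct hH as [HA [[p0 Hp0] [Hconn Hmax]]].
  assert (Hpos : forall p, H p -> 0 < depth p).
  { intros p Hp. specialize (HA p Hp). simpl in HA. apply le_INR in Hk. simpl in Hk. lra. }
  set (C := comp_of (Apos cd) p0).
  assert (hC : component cd (Apos cd) C) by (apply comp_of_component; apply Hpos; auto).
  exists (fullsub cd (W0 cd C)). split; [apply make_horoball; auto|].
  intros p Hp. apply (closure_fullsub cd hSA C hC). apply (C_closure cd hSA C). exists H. repeat split; auto.
Qed.

End HB.

Lemma lub_approx2 (E : R -> Prop) m y : is_lub E m -> y < m -> exists x, E x /\ y < x.
Proof.
  intros [Hub Hl] Hy. apply NNPP. intro Hno.
  assert (is_upper_bound E y).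
  { intros x Hx. destruct (Rle_dec x y); auto. exfalso; apply Hno; exists x; split; auto; lra. }
  specialize (Hl y H). lra.
Qed.

Lemma lip_cont (h : R -> R) u : (forall s t, Rabs (h s - h t) <= Rabs (s - t)) -> continuity_pt h u.
Proof.
  intros HL eps He. exists eps. split; auto. intros x [_ Hx]. simpl in *. unfold R_dist in *.
  eapply Rle_lt_trans; [apply HL|]. auto.
Qed.

Lemma slope_const (f : R -> R) x y k :
  (forall s t, x <= s <= y -> x <= t <= y -> Rabs (f s - f t) <= Rabs (s - t)) -> x <= y ->
  (forall u, x < u < y -> is_derive f u k) -> f y - f x = k * (y - x).
Proof.
  intros HL Hxy Hd.
  set (cl := fun u => Rmax x (Rmin y u)).
  assert (Hcl : forall u, x <= cl u <= y) by (intros u; unfold cl, Rmax, Rmin; repeat destruct Rle_dec; lra).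
  assert (Hcl2 : forall u v, Rabs (cl u - cl v) <= Rabs (u - v)).
  { intros u v. unfold cl, Rmax, Rmin. apply Rabs_le. repeat destruct Rle_dec; unfold Rabs; destruct Rcase_abs; lra. }
  assert (Hcl3 : forall u, x <= u <= y -> cl u = u) by (intros u Hu; unfold cl, Rmax, Rmin; repeat destruct Rle_dec; lra).
  set (h := fun u => f (cl u)).
  assert (HhL : forall s t, Rabs (h s - h t) <= Rabs (s - t)).
  { intros s t. unfold h. eapply Rle_trans; [apply HL; apply Hcl|apply Hcl2]. }
  destruct (MVT_gen h x y (fun _ => k)) as [c [Hc E]].
  - intros u Hu. rewrite Rmin_left in Hu by lra. rewrite Rmax_right in Hu by lra.
    apply (is_derive_ext_loc f h); [|apply Hd; auto].
    apply (locally_interval _ u x y); simpl; try lra.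
    intros v Hv1 Hv2. unfold h. rewrite Hcl3; auto; lra.
  - intros u _. apply lip_cont; auto.
  - unfold h in E. rewrite !Hcl3 in E by lra. exact E.
Qed.

Lemma tent (f : R -> R) cs ds A B c d :
  (forall s t, cs <= s <= ds -> cs <= t <= ds -> Rabs (f s - f t) <= Rabs (s - t)) ->
  cs <= A <= B -> B <= ds -> B - A <= 3 ->
  (forall t, cs < t < A -> is_derive f t 1) ->
  (forall t, A < t < B -> is_derive f t 0) ->
  (forall t, B < t < ds -> is_derive f t (-1)) ->
  cs <= c -> d <= ds -> 3 <= d - c ->
  forall t K m, c <= t <= d -> K <= f c -> K <= f d -> m <= t - c -> m <= d - t -> m <= (d - c - 3) / 2 ->
  K + m <= f t.
Proof.
  intros HL HA HB H3 D1 D2 D3 Hc Hd Hdc t K m Ht K1 K2 M1 M2 M3.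
  assert (R : forall x y, cs <= x <= y -> y <= A -> f y - f x = 1 * (y - x)).
  { intros x y Hx Hy. apply slope_const; try lra.
    - intros; apply HL; lra.
    - intros u Hu; apply D1; lra. }
  assert (F : forall x y, A <= x <= y -> y <= B -> f y - f x = 0 * (y - x)).
  { intros x y Hx Hy. apply slope_const; try lra.
    - intros; apply HL; lra.
    - intros u Hu; apply D2; lra. }
  assert (Fa : forall x y, B <= x <= y -> y <= ds -> f y - f x = -1 * (y - x)).
  { intros x y Hx Hy. apply slope_const; try lra.
    - intros; apply HL; lra.
    - intros u Hu; apply D3; lra. }
  destruct (Rle_dec t A).
  - pose proof (R c t ltac:(lra) ltac:(lra)). lra.
  - destruct (Rle_dec B t).
    + pose proof (Fa t d ltac:(lra) ltac:(lra)). lra.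
    + destruct (Rle_dec c A); destruct (Rle_dec B d).
      * pose proof (R c A ltac:(lra) ltac:(lra)). pose proof (F A t ltac:(lra) ltac:(lra)).
        pose proof (F t B ltac:(lra) ltac:(lra)). pose proof (Fa B d ltac:(lra) ltac:(lra)). lra.
      * pose proof (R c A ltac:(lra) ltac:(lra)). pose proof (F A t ltac:(lra) ltac:(lra)). lra.
      * pose proof (F t B ltac:(lra) ltac:(lra)). pose proof (Fa B d ltac:(lra) ltac:(lra)). lra.
      * lra.
Qed.

Lemma max_interval (P : R -> Prop) a b c d : a <= c -> c <= d -> d <= b -> (forall t, c <= t <= d -> P t) ->
  (forall x y, a <= x < y -> y <= b -> (forall t, x < t <= y -> P t) -> P x) ->
  (forall x y, a <= y < x -> x <= b -> (forall t, y <= t < x -> P t) -> P x) ->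
  exists cs ds, a <= cs <= c /\ d <= ds <= b /\ (forall t, cs <= t <= ds -> P t) /\
   (forall c' d', a <= c' <= cs -> ds <= d' <= b -> (forall t, c' <= t <= d' -> P t) -> c' = cs /\ d' = ds).
Proof.
  intros Hac Hcd Hdb HP Cl Cr.
  set (F := fun y => a <= - y <= c /\ forall t, - y <= t <= d -> P t).
  assert (Fb : bound F) by (exists (- a); intros y [Hy _]; lra).
  assert (Fn : exists y, F y) by (exists (- c); split; [lra|]; intros t Ht; apply HP; lra).
  destruct (completeness F Fb Fn) as [m Hm].
  set (cs := - m).
  assert (Hcs1 : cs <= c) by (unfold cs; assert (F (-c)) by (split; [lra|]; intros t Ht; apply HP; lra); pose proof (proj1 Hm _ H); lra).
  assert (Hcs2 : a <= cs) by (unfold cs; assert (m <= -a) by (apply (proj2 Hm); intros y [Hy _]; lra); lra).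
  assert (P1 : forall t, cs < t <= d -> P t).
  { intros t Ht. destruct (lub_approx2 F m (- t) Hm ltac:(unfold cs in Ht; lra)) as [y [[Hy1 Hy2] Hy3]].
    apply Hy2; lra. }
  assert (P2 : forall t, cs <= t <= d -> P t).
  { intros t Ht. destruct (Req_dec t cs) as [->|Hne]; [|apply P1; lra].
    destruct (Req_dec cs d) as [E|N].
    - apply HP; lra.
    - apply (Cl cs d); try lra. intros; apply P1; lra. }
  set (E := fun y => d <= y <= b /\ forall t, cs <= t <= y -> P t).
  assert (Eb : bound E) by (exists b; intros y [Hy _]; lra).
  assert (En : exists y, E y) by (exists d; split; [lra|]; auto).
  destruct (completeness E Eb En) as [ds Hds].
  assert (Hds1 : d <= ds) by (apply (proj1 Hds); split; [lra|]; auto).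
  assert (Hds2 : ds <= b) by (apply (proj2 Hds); intros y [Hy _]; lra).
  assert (Q1 : forall t, cs <= t < ds -> P t).
  { intros t Ht. destruct (lub_approx2 E ds t Hds ltac:(lra)) as [y [[Hy1 Hy2] Hy3]]. apply Hy2; lra. }
  assert (Q2 : forall t, cs <= t <= ds -> P t).
  { intros t Ht. destruct (Req_dec t ds) as [->|Hne]; [|apply Q1; lra].
    destruct (Req_dec cs ds) as [E'|N].
    - apply P2; lra.
    - apply (Cr ds cs); try lra. auto. }
  exists cs, ds. split; [lra|]. split; [lra|]. split; [auto|].
  intros c' d' Hc' Hd' HPc. split.
  - assert (F (- c')) by (split; [lra|]; intros t Ht; apply HPc; lra).
    pose proof (proj1 Hm _ H). unfold cs in *. lra.
  - assert (E d') by (split; [lra|]; intros t Ht; apply HPc; lra).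
    pose proof (proj1 Hds _ H). lra.
Qed.

Section Main.
Variable cd : CuspData.
Variable hSA : StandingAssumptions cd.
Notation Pt := (Pt cd).
Notation dX := (dX cd).
Notation depth := (depth cd).

Lemma geo_rev0 g D : geodesic cd g 0 D -> geodesic cd (fun s => g (D - s)) 0 D.
Proof.
  intros [HD H]. split; auto. intros s t Hs Ht. rewrite H by lra. rewrite <- Rabs_Ropp. f_equal; ring.
Qed.

Lemma geo_dist g a b s t : geodesic cd g a b -> a <= s <= b -> a <= t <= b -> dX (g s) (g t) = Rabs (s - t).
Proof. intros [_ H]; auto. Qed.

Lemma matching (dl : R) (Hhyp : hyperbolic cd dl) tau1 tau2 s1 e1 s2 e2 L :
  geodesic cd tau1 s1 e1 -> geodesic cd tau2 s2 e2 ->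
  dX (tau1 s1) (tau2 s2) <= L -> dX (tau1 e1) (tau2 e2) <= L ->
  forall u, s2 <= u <= e2 -> L + dl < u - s2 -> L + 2 * dl < e2 - u ->
  exists t, s1 <= t <= e1 /\ dX (tau1 t) (tau2 u) <= 2 * dl.
Proof.
  intros G1 G2 HL1 HL2 u Hu Hu1 Hu2.
  set (x1 := tau1 s1) in *. set (y1 := tau1 e1) in *. set (x2 := tau2 s2) in *. set (y2 := tau2 e2) in *.
  destruct (geodesic_exists cd hSA x1 x2) as [al [Ga [Ha0 HaD]]]. set (Da := dX x1 x2) in *.
  destruct (geodesic_exists cd hSA y1 y2) as [be [Gb [Hb0 HbD]]]. set (Db := dX y1 y2) in *.
  destruct (geodesic_exists cd hSA x1 y2) as [ga [Gg [Hg0 HgD]]]. set (Dg := dX x1 y2) in *.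
  pose proof (dX_ge0 cd hSA x1 x2) as Da0. pose proof (dX_ge0 cd hSA y1 y2) as Db0.
  pose proof (dX_ge0 cd hSA x1 y2) as Dg0. fold Da in Da0. fold Db in Db0. fold Dg in Dg0.
  pose proof (proj1 G1) as Hse1. pose proof (proj1 G2) as Hse2.
  assert (C1 : dX (tau2 e2) (ga (Dg - 0)) = 0).
  { replace (Dg - 0) with Dg by ring. rewrite (dX_sym cd hSA). auto. }
  assert (C2 : dX (ga (Dg - Dg)) (al 0) = 0).
  { replace (Dg - Dg) with 0 by ring. rewrite Hg0, Ha0. apply dX_refl; auto. }
  assert (C3 : dX (al Da) (tau2 s2) = 0) by exact HaD.
  destruct (Hhyp tau2 (fun s => ga (Dg - s)) al s2 e2 0 Dg 0 Da G2 (geo_rev0 _ _ Gg) Ga C1 C2 C3 u Hu)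
    as [r [[Hr Hd]|[Hr Hd]]]; cbv beta in Hd.
  - set (w := Dg - r).
    assert (C4 : dX (ga Dg) (be (Db - 0)) = 0).
    { replace (Db - 0) with Db by ring. apply (dX0 cd hSA).
      pose proof (dX_tri cd hSA (ga Dg) y2 (be Db)). rewrite (dX_sym cd hSA y2) in H. lra. }
    assert (C5 : dX (be (Db - Db)) (tau1 (s1 + e1 - s1)) = 0).
    { replace (Db - Db) with 0 by ring. replace (s1 + e1 - s1) with e1 by ring. rewrite Hb0. apply dX_refl; auto. }
    assert (C6 : dX (tau1 (s1 + e1 - e1)) (ga 0) = 0).
    { replace (s1 + e1 - e1) with s1 by ring. rewrite Hg0. apply dX_refl; auto. }
    destruct (Hhyp ga (fun s => be (Db - s)) (fun s => tau1 (s1 + e1 - s)) 0 Dg 0 Db s1 e1 Gg (geo_rev0 _ _ Gb) (geodesic_rev cd tau1 s1 e1 G1) C4 C5 C6 w ltac:(unfold w; lra))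
      as [r' [[Hr' Hd']|[Hr' Hd']]]; cbv beta in Hd'.
    + exfalso.
      assert (E : dX (tau2 u) y2 = e2 - u) by (unfold y2; rewrite (geo_dist tau2 s2 e2) by (auto; lra); rewrite Rabs_left1 by lra; ring).
      pose proof (dX_tri cd hSA (tau2 u) (ga w) y2) as T1.
      pose proof (dX_tri cd hSA (ga w) (be (Db - r')) y2) as T2.
      pose proof (dX_tri cd hSA (be (Db - r')) (be Db) y2) as T3.
      rewrite (geo_dist be 0 Db) in T3 by (auto; lra). rewrite HbD in T3.
      rewrite Rabs_left1 in T3 by lra. unfold w in *. lra.
    + exists (s1 + e1 - r'). split; [lra|].
      pose proof (dX_tri cd hSA (tau1 (s1 + e1 - r')) (ga w) (tau2 u)).
      pose proof (dX_sym cd hSA (tau1 (s1 + e1 - r')) (ga w)). pose proof (dX_sym cd hSA (ga w) (tau2 u)). unfold w in *. lra.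
  - exfalso.
    assert (E : dX (tau2 u) x2 = u - s2) by (unfold x2; rewrite (geo_dist tau2 s2 e2) by (auto; lra); rewrite Rabs_right by lra; ring).
    pose proof (dX_tri cd hSA (tau2 u) (al r) x2) as T1.
    pose proof (dX_tri cd hSA (al r) (al Da) x2) as T2.
    rewrite (geo_dist al 0 Da) in T2 by (auto; lra). rewrite HaD in T2.
    rewrite Rabs_left1 in T2 by lra. lra.
Qed.

End Main.

Theorem mainTheorem5 :
  forall (cd : CuspData), StandingAssumptions cd ->
  forall delta : nat, (1 <= delta)%nat -> hyperbolic cd (INR delta) ->
  forall (H : Pt cd -> Prop),
    (is_horoball cd H \/ exists k : nat, (1 <= k)%nat /\ is_khoroball cd k H) ->
  forall (tau1 tau2 : R -> Pt cd) (s1 e1 s2 e2 L T : R),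
    regular_geodesic cd tau1 s1 e1 -> regular_geodesic cd tau2 s2 e2 ->
    dX cd (tau1 s1) (tau2 s2) <= L -> dX cd (tau1 e1) (tau2 e2) <= L ->
    4 * L + 8 * INR delta + 3 <= T ->
    contains_segment cd tau1 s1 e1 H T ->
    contains_segment cd tau2 s2 e2 H (T - (4 * L + 8 * INR delta)).
Proof.
  intros cd hSA delta Hdel Hhyp H HH tau1 tau2 s1 e1 s2 e2 L T [G1 R1] [G2 _] HL1 HL2 HT
    [c [d [[Hc1 Hc2] [Hd [HTdc Hin]]]]].
  set (dl := INR delta) in *.
  assert (Hdl : 1 <= dl) by (apply le_INR in Hdel; auto).
  assert (L0 : 0 <= L) by (pose proof (dX_ge0 cd hSA (tau1 s1) (tau2 s2)); lra).
  pose proof (proj1 G1) as Hse1. pose proof (proj1 G2) as Hse2.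
  assert (SA : exists H' K, is_horoball cd H' /\ (forall t, c <= t <= d -> H' (tau1 t)) /\ 0 <= K /\
     (forall t, c <= t <= d -> K <= depth cd (tau1 t)) /\
     ((H' = H /\ K = 0) \/ (exists k, is_khoroball cd k H /\ K = INR k))).
  { destruct HH as [HH|[k [Hk HH]]].
    - exists H, 0. split; [auto|]. split; [auto|]. split; [lra|]. split; [intros; apply depth_ge0; auto|].
      left; auto.
    - destruct (khoroball_in_horoball cd hSA k H Hk HH) as [H' [HH' Hsub]].
      exists H', (INR k). repeat split; auto.
      + apply pos_INR.
      + intros t Ht. destruct HH as [HA _]. apply (HA (tau1 t)). auto.
      + right. exists k. auto. }
  destruct SA as [H' [K [HH' [Hin' [K0 [HK Hcase]]]]]].
  set (f := fun t => depth cd (tau1 t)).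
  assert (Hf : forall s t, s1 <= s <= e1 -> s1 <= t <= e1 -> Rabs (f s - f t) <= Rabs (s - t)).
  { intros s t Hs Ht. unfold f. rewrite <- (geo_dist cd tau1 s1 e1 s t G1 Hs Ht). apply depth_lip; auto. }
  destruct (horoball_props cd hSA H' HH') as [C' [hC' [Hdeep' [Hcl' [W HW]]]]].
  assert (Hclo : forall x y eps, s1 <= x <= e1 -> s1 <= y <= e1 -> 0 < eps -> Rabs (x - y) < eps -> H' (tau1 y) ->
     exists q, fullsub cd W q /\ dX cd (tau1 x) q < eps).
  { intros x y eps Hx Hy He Hxy Hy'. exists (tau1 y). split; [apply HW; auto|].
    rewrite (geo_dist cd tau1 s1 e1) by auto. auto. }
  destruct (max_interval (fun t => H' (tau1 t)) s1 e1 c d Hc1 Hc2 Hd Hin') as [cs [ds [Hcs [Hds [Hcsds Hmax]]]]].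
  - intros x y Hx Hy HP. apply HW. apply fullsub_closed; auto. intros eps He.
    set (t := Rmin (x + eps/2) y).
    assert (Ht : x < t <= y /\ t - x < eps) by (unfold t, Rmin; destruct Rle_dec; lra).
    apply (Hclo x t); try lra. rewrite Rabs_left1 by lra. lra. apply HP; lra.
  - intros x y Hx Hy HP. apply HW. apply fullsub_closed; auto. intros eps He.
    set (t := Rmax (x - eps/2) y).
    assert (Ht : y <= t < x /\ x - t < eps) by (unfold t, Rmax; destruct Rle_dec; lra).
    apply (Hclo x t); try lra. rewrite Rabs_right by lra. lra. apply HP; lra.
  - destruct (R1 H' HH' cs ds ltac:(lra) ltac:(lra) Hcsds Hmax) as [A [B [HAB [HBd [H3 [D1 [D2 D3]]]]]]].
    assert (Tent : forall t m, c <= t <= d -> m <= t - c -> m <= d - t -> m <= (d - c - 3) / 2 -> K + m <= f t).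
    { intros t m Ht M1 M2 M3. apply (tent f cs ds A B c d); auto; try lra.
      - intros; apply Hf; lra.
      - apply HK; lra.
      - apply HK; lra. }
    set (a := L + 4 * dl). set (u1 := s2 + (c - s1) + a). set (u2 := e2 - (e1 - d) - a).
    assert (Hlen : (e1 - s1) - 2 * L <= e2 - s2).
    { pose proof (geo_dist cd tau1 s1 e1 s1 e1 G1 ltac:(lra) ltac:(lra)) as E1.
      pose proof (geo_dist cd tau2 s2 e2 s2 e2 G2 ltac:(lra) ltac:(lra)) as E2.
      rewrite Rabs_left1 in E1, E2 by lra.
      pose proof (dX_tri cd hSA (tau1 s1) (tau2 s2) (tau1 e1)).
      pose proof (dX_tri cd hSA (tau2 s2) (tau2 e2) (tau1 e1)).
      rewrite (dX_sym cd hSA (tau2 e2) (tau1 e1)) in H1. lra. }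
    assert (Hu12 : T - (4 * L + 8 * dl) <= u2 - u1) by (unfold u1, u2, a; lra).
    assert (Key : forall u, u1 <= u <= u2 -> exists t, c <= t <= d /\ dX cd (tau1 t) (tau2 u) <= 2 * dl /\
       K + 2 * dl + Rmin (u - u1) (Rmin (u2 - u) 1) <= f t).
    { intros u Hu.
      destruct (matching cd hSA dl Hhyp tau1 tau2 s1 e1 s2 e2 L G1 G2 HL1 HL2 u) as [t [Ht Hdt]];
        try (unfold u1, u2, a in Hu; lra).
      pose proof (geo_dist cd tau1 s1 e1 s1 t G1 ltac:(lra) ltac:(lra)) as E1.
      pose proof (geo_dist cd tau2 s2 e2 s2 u G2 ltac:(unfold u1, u2, a in Hu; lra) ltac:(unfold u1, u2, a in Hu; lra)) as E2.
      pose proof (geo_dist cd tau1 s1 e1 t e1 G1 ltac:(lra) ltac:(lra)) as E3.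
      pose proof (geo_dist cd tau2 s2 e2 u e2 G2 ltac:(unfold u1, u2, a in Hu; lra) ltac:(unfold u1, u2, a in Hu; lra)) as E4.
      rewrite Rabs_left1 in E1, E2, E3, E4 by (unfold u1, u2, a in Hu; lra).
      pose proof (dX_tri cd hSA (tau2 s2) (tau1 s1) (tau2 u)) as T1.
      pose proof (dX_tri cd hSA (tau1 s1) (tau1 t) (tau2 u)) as T2.
      pose proof (dX_tri cd hSA (tau2 u) (tau1 t) (tau2 e2)) as T3.
      pose proof (dX_tri cd hSA (tau1 t) (tau1 e1) (tau2 e2)) as T4.
      rewrite (dX_sym cd hSA (tau2 s2) (tau1 s1)) in T1.
      rewrite (dX_sym cd hSA (tau2 u) (tau1 t)) in T3.
      set (mu := Rmin (u - u1) (Rmin (u2 - u) 1)).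
      assert (Mu : 0 <= mu /\ mu <= u - u1 /\ mu <= u2 - u /\ mu <= 1).
      { unfold mu. pose proof (Rmin_l (u - u1) (Rmin (u2 - u) 1)). pose proof (Rmin_r (u - u1) (Rmin (u2 - u) 1)).
        pose proof (Rmin_l (u2 - u) 1). pose proof (Rmin_r (u2 - u) 1).
        repeat split; try lra. apply Rmin_glb; [lra|apply Rmin_glb; lra]. }
      exists t. split; [unfold u1, u2, a in *; lra|]. split; auto.
      replace (K + 2 * dl + mu) with (K + (2 * dl + mu)) by ring.
      apply Tent; unfold u1, u2, a in *; lra. }
    assert (Conn : forall u, u1 <= u <= u2 -> exists t sg D, c <= t <= d /\ geodesic cd sg 0 D /\ sg 0 = tau1 t /\
        dX cd (sg D) (tau2 u) = 0 /\ K + 2 * dl + Rmin (u - u1) (Rmin (u2 - u) 1) <= depth cd (tau1 t) /\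
        forall s, 0 <= s <= D -> K + Rmin (u - u1) (Rmin (u2 - u) 1) <= depth cd (sg s)).
    { intros u Hu. destruct (Key u Hu) as [t [Ht [Hdt Hft]]].
      destruct (geodesic_exists cd hSA (tau1 t) (tau2 u)) as [sg [Gs [Hs0 HsD]]].
      exists t, sg, (dX cd (tau1 t) (tau2 u)).
      split; [lra|]. split; [auto|]. split; [auto|]. split; [auto|]. split; [unfold f in Hft; auto|].
      intros s Hs. pose proof (depth_lip' cd hSA (tau1 t) (sg s)).
      rewrite <- Hs0 in H0. rewrite (geo_dist cd sg 0 _ 0 s Gs) in H0 by lra.
      rewrite Rabs_left1 in H0 by lra. rewrite Hs0 in H0. unfold f in Hft. lra. }
    exists u1, u2. split; [split; unfold u1, u2, a in *; lra|]. split; [unfold u2, a; lra|]. split; [lra|].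
    destruct Hcase as [[-> ->]|[k [hk ->]]].
    +
      assert (Int : forall u, u1 < u < u2 -> C' (tau2 u)).
      { intros u Hu. destruct (Conn u ltac:(lra)) as [t [sg [D [Ht [Gs [Hs0 [HsD [Hdt Hsg]]]]]]]].
        assert (Hmu : 0 < Rmin (u - u1) (Rmin (u2 - u) 1)).
        { apply Rmin_glb_lt; [lra|apply Rmin_glb_lt; lra]. }
        pose proof (proj1 Gs) as HD0.
        assert (Cg : C' (sg D)).
        { apply (maximal_absorb cd (Apos cd) C' (img cd sg 0 D) hC').
          - apply geod_conn; auto.
          - intros x [s [Hs ->]]. unfold Apos. specialize (Hsg s Hs). lra.
          - exists (sg 0). split; [|exists 0; split; [lra|auto]].
            rewrite Hs0. apply Hdeep'; [apply Hin; lra|lra].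
          - exists D. split; [lra|auto]. }
        eapply absorb0; eauto. unfold Apos.
        rewrite <- (depth_zero cd hSA _ _ HsD). specialize (Hsg D ltac:(lra)). lra. }
      intros u Hu. apply Hcl'. intros eps He.
      set (h := Rmin (eps / 2) 1).
      assert (Hh : 0 < h <= 1 /\ h < eps) by (unfold h, Rmin; destruct Rle_dec; lra).
      destruct (Rle_dec u ((u1 + u2) / 2)).
      * exists (tau2 (u + h)). split; [apply Int; lra|].
        rewrite (geo_dist cd tau2 s2 e2 _ _ G2) by (unfold u1, u2, a in *; lra).
        rewrite Rabs_right by lra. lra.
      * exists (tau2 (u - h)). split; [apply Int; lra|].
        rewrite (geo_dist cd tau2 s2 e2 _ _ G2) by (unfold u1, u2, a in *; lra).
        rewrite Rabs_left1 by lra. lra.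
    +
      intros u Hu. destruct (Conn u Hu) as [t [sg [D [Ht [Gs [Hs0 [HsD [Hdt Hsg]]]]]]]].
      assert (Hmu : 0 <= Rmin (u - u1) (Rmin (u2 - u) 1)).
      { apply Rmin_glb; [lra|apply Rmin_glb; lra]. }
      pose proof (proj1 Gs) as HD0.
      assert (Cg : H (sg D)).
      { apply (maximal_absorb cd (fun p => INR k <= depth cd p) H (img cd sg 0 D) hk).
        - apply geod_conn; auto.
        - intros x [s [Hs ->]]. specialize (Hsg s Hs). lra.
        - exists (sg 0). split; [|exists 0; split; [lra|auto]].
          rewrite Hs0. apply Hin; lra.
        - exists D. split; [lra|auto]. }
      eapply absorb0; eauto. simpl.
      rewrite <- (depth_zero cd hSA _ _ HsD). specialize (Hsg D ltac:(lra)). lra.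
Qed.
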